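(* Let $V$ be a simple isometric linear transformation with deficiency indices $(1,1)$ in a Hilbert space, with characteristic function $w_V$. A point $z\in\mathbb{T}$ is not an eigenvalue of any unitary extension $U$ of $V$ if and only if $w_V$ does not have an angular derivative (in the sense of Carathéodory) at $z$. Moreover, the symmetric linear transformation $B=\mu^{-1}(V)$ is densely defined if and only if $w_V$ does not have an angular derivative at $z=1$.
   Context: $\mathbb{D}$ is the open unit disc, $\mathbb{T}$ the unit circle, $\mu^{-1}(V)=i(1+V)(1-V)^{-1}$ with domain $\mathrm{ran}(V-1)$ (the inverse Cayley transform). An isometric linear transformation $V$ is a linear isometry from a closed subspace $\mathrm{dom}(V)$ into the Hilbert space; deficiency indices $(\dim\mathrm{dom}(V)^\perp,\dim\mathrm{ran}(V)^\perp)$; simple = no unitary restriction to a non-trivial subspace. Its characteristic function (defined up to a unimodular constant) is $w_V(z)=\frac{z\langle (U-z)^{-1}\psi_+,\psi_+\rangle}{\langle (U-z)^{-1}U\psi_+,\psi_+\rangle}$, $z\in\mathbb{D}$, with $U$ any unitary extension of $V$ in the same Hilbert space and $0\ne\psi_+\in\mathrm{dom}(V)^\perp$; it lies in the closed unit ball of $H^\infty(\mathbb{D})$. A function $b$ in the closed unit ball of $H^\infty(\mathbb{D})$ has an angular derivative in the sense of Carathéodory at $\gamma\in\mathbb{T}$ if the non-tangential limits of $b$ and $b'$ at $\gamma$ exist and the non-tangential limit of $b$ at $\gamma$ has modulus one. *)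

(* Defs.v *)
From Stdlib Require Import Reals.
From Coquelicot Require Import Complex.

Local Open Scope R_scope.

Notation CC := Complex.C.

(* Complex Hilbert spaces (inner product linear in the first argument) *)

Record HilbertSpace (H : Type) := {
  hzero : H;
  hadd  : H -> H -> H;
  hopp  : H -> H;
  hscal : CC -> H -> H;
  hinner : H -> H -> CC;
  hadd_assoc : forall x y z, hadd x (hadd y z) = hadd (hadd x y) z;
  hadd_comm  : forall x y, hadd x y = hadd y x;
  hadd_zero  : forall x, hadd x hzero = x;
  hadd_opp   : forall x, hadd x (hopp x) = hzero;
  hscal_one  : forall x, hscal (RtoC 1) x = x;
  hscal_assoc : forall a b x, hscal a (hscal b x) = hscal (Cmult a b) x;
  hscal_distr_l : forall a x y, hscal a (hadd x y) = hadd (hscal a x) (hscal a y);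
  hscal_distr_r : forall a b x, hscal (Cplus a b) x = hadd (hscal a x) (hscal b x);
  hinner_conj : forall x y, hinner x y = Cconj (hinner y x);
  hinner_add_l : forall x y z, hinner (hadd x y) z = Cplus (hinner x z) (hinner y z);
  hinner_scal_l : forall a x y, hinner (hscal a x) y = Cmult a (hinner x y);
  hinner_pos : forall x, 0 <= Re (hinner x x);
  hinner_def : forall x, hinner x x = RtoC 0 -> x = hzero;
  hcomplete : forall u : nat -> H,
    (forall eps, 0 < eps -> exists N, forall m n, (N <= m)%nat -> (N <= n)%nat ->
        sqrt (Re (hinner (hadd (u m) (hopp (u n))) (hadd (u m) (hopp (u n))))) < eps) ->
    exists l, forall eps, 0 < eps -> exists N, forall n, (N <= n)%nat ->
        sqrt (Re (hinner (hadd (u n) (hopp l)) (hadd (u n) (hopp l)))) < eps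
}.

Arguments hzero {H} _.
Arguments hadd {H} _ _ _.
Arguments hopp {H} _ _.
Arguments hscal {H} _ _ _.
Arguments hinner {H} _ _ _.

Section HilbertDefs.
Context {H : Type} (HS : HilbertSpace H).

Definition hsub (x y : H) : H := hadd HS x (hopp HS y).
Definition hnorm (x : H) : R := sqrt (Re (hinner HS x x)).

Definition closed_subspace (S : H -> Prop) : Prop :=
  S (hzero HS) /\
  (forall x y, S x -> S y -> S (hadd HS x y)) /\
  (forall a x, S x -> S (hscal HS a x)) /\
  (forall u : nat -> H, forall l, (forall n, S (u n)) ->
     (forall eps, 0 < eps -> exists N, forall n, (N <= n)%nat -> hnorm (hsub (u n) l) < eps) ->
     S l).

Definition orth (S : H -> Prop) : H -> Prop :=
  fun y => forall x, S x -> hinner HS x y = RtoC 0.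

Definition dim_one (S : H -> Prop) : Prop :=
  exists e, e <> hzero HS /\ forall y, S y <-> exists c, y = hscal HS c e.

Definition dense (S : H -> Prop) : Prop :=
  forall h eps, 0 < eps -> exists y, S y /\ hnorm (hsub h y) < eps.

(* An isometric linear transformation: a linear isometry V defined on the
   closed subspace dom (values of V outside dom are irrelevant). *)
Definition isometric_lt (dom : H -> Prop) (V : H -> H) : Prop :=
  closed_subspace dom /\
  (forall x y, dom x -> dom y -> V (hadd HS x y) = hadd HS (V x) (V y)) /\
  (forall a x, dom x -> V (hscal HS a x) = hscal HS a (V x)) /\
  (forall x, dom x -> hnorm (V x) = hnorm x).

Definition ran (dom : H -> Prop) (V : H -> H) : H -> Prop :=
  fun y => exists x, dom x /\ y = V x.

(* deficiency indices (dim dom(V)^perp, dim ran(V)^perp) = (1,1) *)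
Definition deficiency_1_1 (dom : H -> Prop) (V : H -> H) : Prop :=
  dim_one (orth dom) /\ dim_one (orth (ran dom V)).

(* simple: no unitary restriction to a non-trivial (closed) subspace,
   i.e. no closed subspace L <> {0}, L included in dom, with V(L) = L. *)
Definition simple_isometry (dom : H -> Prop) (V : H -> H) : Prop :=
  ~ exists L : H -> Prop,
      closed_subspace L /\ (exists x, L x /\ x <> hzero HS) /\
      (forall x, L x -> dom x) /\
      (forall x, L x -> L (V x)) /\
      (forall y, L y -> exists x, L x /\ y = V x).

Definition unitary (U : H -> H) : Prop :=
  (forall x y, U (hadd HS x y) = hadd HS (U x) (U y)) /\
  (forall a x, U (hscal HS a x) = hscal HS a (U x)) /\
  (forall x, hnorm (U x) = hnorm x) /\
  (forall y, exists x, U x = y).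

(* unitary extension of V in the same Hilbert space *)
Definition unitary_extension (dom : H -> Prop) (V U : H -> H) : Prop :=
  unitary U /\ forall x, dom x -> U x = V x.

Definition eigenvalue (U : H -> H) (z : CC) : Prop :=
  exists x, x <> hzero HS /\ U x = hscal HS z x.

(* w is a characteristic function of V:
   w z = z <(U-z)^{-1} psi, psi> / <(U-z)^{-1} U psi, psi>  for z in the disc,
   for some unitary extension U and some nonzero psi in dom(V)^perp.
   (U - z)^{-1} psi is described as the (unique) x with U x - z x = psi. *)
Definition characteristic_function (dom : H -> Prop) (V : H -> H) (w : CC -> CC) : Prop :=
  exists U psi,
    unitary_extension dom V U /\ psi <> hzero HS /\ orth dom psi /\
    forall z, Cmod z < 1 ->
      forall x y, hsub (U x) (hscal HS z x) = psi ->
                  hsub (U y) (hscal HS z y) = U psi ->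
      w z = Cdiv (Cmult z (hinner HS x psi)) (hinner HS y psi).

End HilbertDefs.

(* non-tangential limit of f at gamma (|gamma| = 1): limit L along every
   Stolz angle { z in D : |z - gamma| < M (1 - |z|) }, M > 1. *)
Definition nt_limit (f : CC -> CC) (gamma L : CC) : Prop :=
  forall M, 1 < M -> forall eps, 0 < eps -> exists delta, 0 < delta /\
    forall z, Cmod z < 1 -> Cmod (Cminus z gamma) < M * (1 - Cmod z) ->
      Cmod (Cminus z gamma) < delta -> Cmod (Cminus (f z) L) < eps.

Definition disc_derivative (f : CC -> CC) (z d : CC) : Prop :=
  forall eps, 0 < eps -> exists delta, 0 < delta /\
    forall w, Cmod w < 1 -> w <> z -> Cmod (Cminus w z) < delta ->
      Cmod (Cminus (Cdiv (Cminus (f w) (f z)) (Cminus w z)) d) < eps.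

Definition has_angular_derivative (b : CC -> CC) (gamma : CC) : Prop :=
  (exists L, nt_limit b gamma L /\ Cmod L = 1) /\
  (exists b' : CC -> CC,
     (forall z, Cmod z < 1 -> disc_derivative b z (b' z)) /\
     exists L', nt_limit b' gamma L').

(* Main.v *)
Require Import Defs.
From Stdlib Require Import Reals Lra Psatz ZArith ClassicalEpsilon Classical.
From Coquelicot Require Import Complex.


Local Open Scope R_scope.

Section Basic.
Context {H : Type} (HS : HilbertSpace H).

Local Notation "x +v y" := (hadd HS x y) (at level 50, left associativity).
Local Notation "a *v x" := (hscal HS a x) (at level 40, no associativity).
Local Notation "[< x , y >]" := (hinner HS x y).
Local Notation "0v" := (hzero HS).
Local Notation "-v x" := (hopp HS x) (at level 35).

Lemma add_0_l x : 0v +v x = x.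
Proof. rewrite hadd_comm; apply hadd_zero. Qed.

Lemma add_opp_l x : (-v x) +v x = 0v.
Proof. rewrite hadd_comm; apply hadd_opp. Qed.

Lemma add_reg_l x y z : x +v y = x +v z -> y = z.
Proof.
  intro E.
  rewrite <- (add_0_l y), <- (add_0_l z), <- (add_opp_l x).
  rewrite <- !hadd_assoc, E; reflexivity.
Qed.

Lemma scal_0_l x : RtoC 0 *v x = 0v.
Proof.
  apply (@add_reg_l (RtoC 0 *v x)).
  rewrite hadd_zero, <- hscal_distr_r.
  f_equal. apply injective_projections; simpl; ring.
Qed.

Lemma scal_0_r a : a *v 0v = 0v.
Proof.
  apply (@add_reg_l (a *v 0v)).
  rewrite hadd_zero, <- hscal_distr_l, hadd_zero; reflexivity.
Qed.

Lemma opp_scal x : -v x = RtoC (-1) *v x.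
Proof.
  apply (@add_reg_l x).
  rewrite hadd_opp.
  assert (E : x +v (RtoC (-1) *v x) = RtoC 1 *v x +v (RtoC (-1) *v x))
    by (rewrite (@hscal_one _ HS x); reflexivity).
  rewrite E, <- hscal_distr_r, <- (scal_0_l x).
  f_equal. apply injective_projections; simpl; ring.
Qed.

Lemma inner_0_l y : [< 0v, y >] = RtoC 0.
Proof.
  rewrite <- (scal_0_l 0v), hinner_scal_l. apply Cmult_0_l.
Qed.

Lemma inner_opp_l x y : [< -v x, y >] = Copp [< x, y >].
Proof.
  rewrite opp_scal, hinner_scal_l.
  apply injective_projections; simpl; ring.
Qed.

Lemma inner_add_r x y z : [< x, y +v z >] = Cplus [< x, y >] [< x, z >].
Proof.
  rewrite hinner_conj, hinner_add_l, Cplus_conj, <- !hinner_conj; reflexivity.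
Qed.

Lemma inner_scal_r a x y : [< x, a *v y >] = Cmult (Cconj a) [< x, y >].
Proof.
  rewrite hinner_conj, hinner_scal_l, Cmult_conj, <- hinner_conj; reflexivity.
Qed.

Lemma inner_0_r x : [< x, 0v >] = RtoC 0.
Proof.
  rewrite hinner_conj, inner_0_l. apply injective_projections; simpl; ring.
Qed.

Lemma inner_opp_r x y : [< x, -v y >] = Copp [< x, y >].
Proof.
  rewrite hinner_conj, inner_opp_l, Copp_conj, <- hinner_conj; reflexivity.
Qed.

Lemma hsub_eq0 x y : hsub HS x y = 0v -> x = y.
Proof.
  unfold hsub; intro E.
  apply (@add_reg_l (-v y)).
  rewrite hadd_comm, E, add_opp_l; reflexivity.
Qed.

Lemma ext_inner x y : (forall v, [< x, v >] = [< y, v >]) -> x = y.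
Proof.
  intro E. apply hsub_eq0. apply hinner_def.
  unfold hsub at 1. rewrite hinner_add_l, inner_opp_l, E.
  apply injective_projections; simpl; ring.
Qed.

Definition nsq x := Re [< x, x >].

Lemma inner_self x : [< x, x >] = RtoC (nsq x).
Proof.
  unfold nsq. pose proof (hinner_conj _ HS x x) as E.
  destruct ([< x, x >]) as [a b] eqn:Ex.
  unfold Cconj in E; simpl in E. injection E as E1. simpl.
  apply injective_projections; simpl; lra.
Qed.

Lemma nsq_nonneg x : 0 <= nsq x.
Proof. apply hinner_pos. Qed.

Lemma nsq_0 x : nsq x = 0 -> x = 0v.
Proof. intro E; apply hinner_def; rewrite inner_self, E; reflexivity. Qed.

Lemma nsq_zero : nsq 0v = 0.
Proof. unfold nsq; rewrite inner_0_l; reflexivity. Qed.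

Lemma nsq_add x y : nsq (x +v y) = nsq x + nsq y + 2 * Re [< x, y >].
Proof.
  unfold nsq. rewrite hinner_add_l, !inner_add_r.
  rewrite (hinner_conj _ HS y x). rewrite !re_plus, re_conj. ring.
Qed.

Lemma nsq_scal a x : nsq (a *v x) = (Cmod a)^2 * nsq x.
Proof.
  unfold nsq. rewrite hinner_scal_l, inner_scal_r, Cmult_assoc, <- Cmod2_conj.
  rewrite inner_self. simpl. ring.
Qed.

Lemma nsq_opp x : nsq (-v x) = nsq x.
Proof.
  unfold nsq. rewrite inner_opp_l, inner_opp_r. destruct (hinner HS x x); simpl; ring.
Qed.

Lemma hnorm_nsq x : hnorm HS x = sqrt (nsq x).
Proof. reflexivity. Qed.

Lemma hnorm_sq x : (hnorm HS x)^2 = nsq x.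
Proof. unfold hnorm. rewrite <- Rsqr_pow2. apply Rsqr_sqrt. apply nsq_nonneg. Qed.

Lemma hnorm_nonneg x : 0 <= hnorm HS x.
Proof. apply sqrt_pos. Qed.

Lemma hnorm_0_eq x : hnorm HS x = 0 -> x = 0v.
Proof. intro E. apply nsq_0. rewrite <- hnorm_sq, E. ring. Qed.

Lemma hnorm_zero : hnorm HS 0v = 0.
Proof. unfold hnorm. fold (nsq 0v). rewrite nsq_zero. apply sqrt_0. Qed.

Lemma hnorm_scal a x : hnorm HS (a *v x) = Cmod a * hnorm HS x.
Proof.
  unfold hnorm. fold (nsq (a *v x)). fold (nsq x). rewrite nsq_scal.
  rewrite sqrt_mult_alt. rewrite <- Rsqr_pow2, sqrt_Rsqr. reflexivity.
  apply Cmod_ge_0. apply pow2_ge_0.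
Qed.

Lemma hnorm_opp x : hnorm HS (-v x) = hnorm HS x.
Proof. unfold hnorm. fold (nsq (-v x)). rewrite nsq_opp. reflexivity. Qed.

Lemma Cmod_sq_re (c : C) : (Cmod c)^2 = Re c ^2 + Im c ^2.
Proof. apply Cmod2_alt. Qed.

Lemma CS_sq x y : (Cmod [< x, y >])^2 <= nsq x * nsq y.
Proof.
  destruct (Req_dec (nsq y) 0) as [Hy|Hy].
  { apply nsq_0 in Hy. subst y. rewrite inner_0_r, nsq_zero.
    rewrite Cmod_0. pose proof (nsq_nonneg x). nra. }
  pose proof (nsq_nonneg y) as Py.
  set (c := Cdiv [< x, y >] (RtoC (nsq y))).
  pose proof (nsq_nonneg (x +v (-v (c *v y)))) as N.
  rewrite nsq_add, nsq_opp, nsq_scal, inner_opp_r, inner_scal_r in N.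
  rewrite Cmod2_alt in N. rewrite Cmod2_alt.
  assert (0 < nsq y) by lra.
  unfold c in N. destruct ([< x, y >]) as [a b].
  unfold Cdiv, Cinv, Cconj, Cmult, Copp, Re, Im in N; simpl in N.
  simpl.
  set (ny := nsq y) in *.
  assert (E1 : (a * (ny / (ny * ny + 0 * 0)) - b * (- 0 / (ny * ny + 0 * 0))) = a / ny)
    by (field; lra).
  assert (E2 : (a * (- 0 / (ny * ny + 0 * 0)) + b * (ny / (ny * ny + 0 * 0))) = b / ny)
    by (field; lra).
  rewrite ?E1, ?E2 in N.
  apply Rmult_le_reg_r with (/ ny). apply Rinv_0_lt_compat; lra.
  replace (nsq x * ny * / ny) with (nsq x) by (field; lra).
  replace (((a / ny) ^ 2 + (b / ny) ^ 2) * ny) with ((a^2 + b^2) / ny) in N by (field; lra).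
  replace (- (a / ny * a - - (b / ny) * b)) with (- ((a^2+b^2)/ny)) in N by (field; lra).
  unfold Rdiv in *.
  assert (T: (a * (a * 1) + b * (b * 1)) * / ny = (a^2+b^2) * /ny) by ring.
  rewrite T. match type of N with 0 <= ?e => assert (E: e = nsq x - (a^2+b^2)*/ny) by (field; lra) end. lra.
Qed.

Lemma CS x y : Cmod [< x, y >] <= hnorm HS x * hnorm HS y.
Proof.
  pose proof (CS_sq x y) as E.
  rewrite <- !hnorm_sq in E.
  apply Rsqr_incr_0_var. rewrite !Rsqr_pow2. nra.
  pose proof (hnorm_nonneg x); pose proof (hnorm_nonneg y); nra.
Qed.

Lemma re_le_cmod c : Re c <= Cmod c.
Proof. pose proof (re_le_Cmod c). pose proof (Rle_abs (Re c)). lra. Qed.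

Lemma hnorm_triangle x y : hnorm HS (x +v y) <= hnorm HS x + hnorm HS y.
Proof.
  apply Rsqr_incr_0_var.
  2: { pose proof (hnorm_nonneg x); pose proof (hnorm_nonneg y); lra. }
  rewrite !Rsqr_pow2, hnorm_sq, nsq_add, <- !hnorm_sq.
  pose proof (CS x y). pose proof (re_le_cmod ([< x, y >])). nra.
Qed.

End Basic.


Local Open Scope R_scope.

Lemma my_choice {A B : Type} (P : A -> B -> Prop) :
  (forall a, exists b, P a b) -> exists f : A -> B, forall a, P a (f a).
Proof.
  intro Hx. exists (fun a => proj1_sig (constructive_indefinite_description _ (Hx a))).
  intro a. exact (proj2_sig (constructive_indefinite_description _ (Hx a))).
Qed.

Lemma Rdiv_le_0_compat a b : 0 <= a -> 0 < b -> 0 <= a / b.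
Proof. intros. unfold Rdiv. apply Rmult_le_pos; auto. left; apply Rinv_0_lt_compat; auto. Qed.

Section Lim.
Context {H : Type} (HS : HilbertSpace H).

Local Notation "x +v y" := (hadd HS x y) (at level 50, left associativity).
Local Notation "a *v x" := (hscal HS a x) (at level 40, no associativity).
Local Notation "[< x , y >]" := (hinner HS x y).
Local Notation "0v" := (hzero HS).
Local Notation "-v x" := (hopp HS x) (at level 35).
Local Notation "x -v y" := (hsub HS x y) (at level 50, left associativity).
Local Notation nm := (hnorm HS).

Ltac vec1 := apply (ext_inner HS); intro; unfold hsub;
  repeat rewrite ?hinner_add_l, ?hinner_scal_l, ?inner_opp_l, ?inner_0_l; ring.

Lemma sub_tri x y z : nm (x -v z) <= nm (x -v y) + nm (y -v z).
Proof.
  replace (x -v z) with ((x -v y) +v (y -v z)) by vec1. apply hnorm_triangle.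
Qed.

Lemma sub_sym x y : nm (x -v y) = nm (y -v x).
Proof.
  replace (x -v y) with (-v (y -v x)) by vec1. apply hnorm_opp.
Qed.

Lemma sub_self x : x -v x = 0v.
Proof. apply hadd_opp. Qed.

Lemma sub_eq0_norm x y : nm (x -v y) = 0 -> x = y.
Proof. intro E. apply (hsub_eq0 HS), (hnorm_0_eq HS), E. Qed.

Lemma small_norm_0 x : (forall eps, 0 < eps -> nm (x) < eps) -> x = 0v.
Proof.
  intro E. apply hnorm_0_eq. pose proof (hnorm_nonneg HS x).
  destruct (Req_dec (nm (x)) 0); auto.
  specialize (E (nm (x))). lra.
Qed.

Definition conv (u : nat -> H) (l : H) : Prop :=
  forall eps, 0 < eps -> exists N, forall n, (N <= n)%nat -> nm (u n -v l) < eps.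

Lemma complete_lim (u : nat -> H) :
  (forall eps, 0 < eps -> exists N, forall m n, (N <= m)%nat -> (N <= n)%nat ->
        nm (u m -v u n) < eps) -> exists l, conv u l.
Proof. intro C. exact (hcomplete _ HS u C). Qed.

Lemma fixed_point (T : H -> H) (c : R) :
  0 <= c < 1 -> (forall a b, nm (T a -v T b) <= c * nm (a -v b)) ->
  exists k, T k = k.
Proof.
  intros [c0 c1] HT.
  set (u := fun n => Nat.iter n T 0v).
  set (d0 := nm (u 1%nat -v u 0%nat)).
  assert (Hd : forall n, nm (u (S n) -v u n) <= c^n * d0).
  { induction n. { rewrite pow_O, Rmult_1_l. apply Rle_refl. }
    assert (E1 : u (S (S n)) = T (u (S n))) by reflexivity.
    assert (E2 : u (S n) = T (u n)) by reflexivity.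
    rewrite E1. rewrite E2 at 2.
    eapply Rle_trans. apply HT. rewrite <- tech_pow_Rmult. pose proof (pow_le c n c0). nra. }
  assert (d0p : 0 <= d0) by apply hnorm_nonneg.
  assert (HD : forall n j, nm (u (n + j)%nat -v u n) <= c^n * d0 * (1 - c^j) / (1 - c)).
  { intros n j. induction j.
    - rewrite Nat.add_0_r, sub_self, hnorm_zero. simpl. right. field. lra.
    - eapply Rle_trans. apply (sub_tri _ (u (n + j)%nat)).
      replace (n + S j)%nat with (S (n + j)) by lia.
      eapply Rle_trans. apply Rplus_le_compat. apply Hd. apply IHj.
      rewrite pow_add. right. simpl. field. lra. }
  assert (HD2 : forall n m, (n <= m)%nat -> nm (u m -v u n) <= c^n * (d0 / (1 - c))).
  { intros n m Hnm. replace m with (n + (m - n))%nat by lia.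
    eapply Rle_trans. apply HD. unfold Rdiv.
    pose proof (pow_le c n c0). pose proof (pow_le c (m - n) c0).
    assert (c ^ (m - n) <= 1). { rewrite <- (pow1 (m - n)). apply pow_incr. lra. }  
    assert (0 < / (1 - c)) by (apply Rinv_0_lt_compat; lra).
    assert (0 <= c ^ n * d0 * / (1 - c) * c ^ (m - n)) by
      (repeat apply Rmult_le_pos; lra).
    replace (c ^ n * d0 * (1 - c ^ (m - n)) * / (1 - c)) with
      (c ^ n * d0 * / (1 - c) - c ^ n * d0 * / (1 - c) * c ^ (m - n)) by ring.
    replace (c ^ n * (d0 * / (1 - c))) with (c ^ n * d0 * / (1 - c)) by ring.
    lra. }
  set (K := d0 / (1 - c)).
  assert (Kp : 0 <= K) by (unfold K; apply Rdiv_le_0_compat; lra).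
  assert (Cauchy : forall eps, 0 < eps -> exists N, forall n, (N <= n)%nat -> c ^ n * K < eps).
  { intros eps ep.
    destruct (pow_lt_1_zero c ltac:(rewrite Rabs_pos_eq; lra) (eps / (K + 1)))
      as [N HN]. apply Rdiv_lt_0_compat; lra.
    exists N. intros n Hn. specialize (HN n Hn). rewrite Rabs_pos_eq in HN by (apply pow_le; lra).
    apply Rle_lt_trans with (eps / (K + 1) * K). apply Rmult_le_compat_r; lra.
    replace (eps / (K + 1) * K) with (eps - eps / (K + 1)) by (field; lra).
    assert (0 < eps / (K + 1)) by (apply Rdiv_lt_0_compat; lra). lra. }
  destruct (complete_lim u) as [l Hl].
  { intros eps ep. destruct (Cauchy (eps/2)) as [N HN]. lra.
    exists N. intros m n Hm Hn.
    eapply Rle_lt_trans. apply (sub_tri _ (u N)).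
    rewrite (sub_sym (u N)).
    pose proof (HD2 N m Hm). pose proof (HD2 N n Hn). specialize (HN N (le_n _)).
    unfold K in HN. lra. }
  exists l. apply sub_eq0_norm.
  destruct (Req_dec (nm (T l -v l)) 0); auto. exfalso.
  set (e := nm (T l -v l)) in *.
  assert (ep : 0 < e) by (pose proof (hnorm_nonneg HS (T l -v l)); unfold e in *; lra).
  destruct (Hl (e / 2)) as [N HN]. lra.
  pose proof (HN N (le_n _)). pose proof (HN (S N) (le_S _ _ (le_n _))).
  assert (nm (T l -v l) <= nm (T l -v T (u N)) + nm (u (S N) -v l)).
  { eapply Rle_trans. apply (sub_tri _ (T (u N))). right. reflexivity. }
  pose proof (HT l (u N)) as H4. rewrite (sub_sym l (u N)) in H4.
  assert (c * nm (u N -v l) <= nm (u N -v l)) by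
    (pose proof (hnorm_nonneg HS (u N -v l)); nra).
  fold e in H3. lra.
Qed.

Definition closure (T : H -> Prop) (v : H) : Prop :=
  forall eps, 0 < eps -> exists y, T y /\ nm (v -v y) < eps.

Lemma closure_incl (T : H -> Prop) v : T v -> closure T v.
Proof. intros Tv eps ep. exists v. split; auto. rewrite sub_self, hnorm_zero. auto. Qed.

Lemma closure_closed (T : H -> Prop) :
  T 0v -> (forall x y, T x -> T y -> T (x +v y)) -> (forall a x, T x -> T (a *v x)) ->
  closed_subspace HS (closure T).
Proof.
  intros T0 Tadd Tscal. split; [|split; [|split]].
  - apply closure_incl; auto.
  - intros x y Hx Hy eps ep.
    destruct (Hx (eps/2)) as [x' [Tx' Hx']]. lra.
    destruct (Hy (eps/2)) as [y' [Ty' Hy']]. lra.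
    exists (x' +v y'). split; auto.
    replace ((x +v y) -v (x' +v y')) with ((x -v x') +v (y -v y')) by vec1.
    eapply Rle_lt_trans. apply hnorm_triangle. lra.
  - intros a x Hx eps ep.
    destruct (Hx (eps / (Cmod a + 1))) as [x' [Tx' Hx']].
    { apply Rdiv_lt_0_compat; auto. pose proof (Cmod_ge_0 a); lra. }
    exists (a *v x'). split; auto.
    replace (a *v x -v a *v x') with (a *v (x -v x')) by vec1.
    rewrite hnorm_scal. pose proof (Cmod_ge_0 a).
    pose proof (hnorm_nonneg HS (x -v x')).
    apply Rle_lt_trans with (Cmod a * (eps / (Cmod a + 1))).
    apply Rmult_le_compat_l; lra.
    unfold Rdiv. rewrite <- Rmult_assoc.
    apply Rmult_lt_reg_r with (Cmod a + 1). lra.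
    rewrite Rmult_assoc, Rinv_l by lra. nra.
  - intros u l Hu Hl eps ep.
    destruct (Hl (eps/2)) as [N HN]. lra.
    destruct (Hu N (eps/2)) as [y [Ty Hy]]. lra.
    exists y. split; auto.
    eapply Rle_lt_trans. apply (sub_tri _ (u N)).
    rewrite sub_sym. specialize (HN N (le_n _)). lra.
Qed.

Definition orthS (S : H -> Prop) (y : H) : Prop := forall x, S x -> [< x, y >] = RtoC 0.

Lemma projection (S : H -> Prop) : closed_subspace HS S ->
  forall x, exists p, S p /\ orth HS S (x -v p).
Proof.
  intros [S0 [Sadd [Sscal Slim]]] x.
  set (E := fun r => exists s, S s /\ r = - nm (x -v s)).
  destruct (completeness E) as [m [Hub Hlub]].
  { exists 0. intros r [s [_ ->]]. pose proof (hnorm_nonneg HS (x -v s)). lra. }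
  { exists (- nm (x -v 0v)). exists 0v. auto. }
  set (d := - m).
  assert (Hlow : forall s, S s -> d <= nm (x -v s)).
  { intros s Ss. assert (E (- nm (x -v s))) by (exists s; auto). apply Hub in H0. unfold d. lra. }
  assert (Happ : forall eps, 0 < eps -> exists s, S s /\ nm (x -v s) < d + eps).
  { intros eps ep. apply NNPP. intro Hn.
    assert (is_upper_bound E (m - eps)).
    { intros r [s [Ss ->]]. apply Rnot_lt_le. intro Hl. apply Hn. exists s. split; auto.
      unfold d. lra. }
    apply Hlub in H0. lra. }
  assert (dp : 0 <= d).
  { assert (m <= 0).
    { apply Hlub. intros r [s [_ ->]]. pose proof (hnorm_nonneg HS (x -v s)). lra. }
    unfold d; lra. }
  destruct (my_choice (fun (n : nat) s => S s /\ nm (x -v s) < d + / INR (Datatypes.S n))) as [s Hs].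
  { intro n. apply Happ. apply Rinv_0_lt_compat. apply lt_0_INR. lia. }
  assert (Hsq : forall m n, nsq HS (s m -v s n) <= 4 * (d + 1) * (/ INR (Datatypes.S m) + / INR (Datatypes.S n))).
  { intros i j.
    set (a := x -v s i). set (b := x -v s j).
    assert (Hpar : nsq HS (a +v b) + nsq HS (a -v b) = 2 * nsq HS a + 2 * nsq HS b).
    { unfold hsub. rewrite !nsq_add, nsq_opp. rewrite inner_opp_r.
      rewrite re_opp. ring. }
    set (mid := RtoC (/2) *v (s i +v s j)).
    assert (Smid : S mid) by (apply Sscal, Sadd; apply Hs).
    assert (E1 : a +v b = RtoC 2 *v (x -v mid)).
    { unfold a, b, mid. apply (ext_inner HS); intro; unfold hsub;
      repeat rewrite ?hinner_add_l, ?hinner_scal_l, ?inner_opp_l, ?inner_0_l.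
      apply injective_projections; simpl; field. }
    assert (E2 : a -v b = s j -v s i) by (unfold a, b; vec1).
    rewrite E1, E2, nsq_scal in Hpar.
    pose proof (Hlow mid Smid) as Hm.
    rewrite <- hnorm_sq in Hpar. rewrite <- (hnorm_sq HS a), <- (hnorm_sq HS b) in Hpar.
    assert (Cmod (RtoC 2) = 2) as C2.
    { rewrite Cmod_R. apply Rabs_pos_eq. lra. }
    rewrite C2 in Hpar.
    destruct (Hs i) as [_ Ha]. destruct (Hs j) as [_ Hb]. fold a in Ha. fold b in Hb.
    pose proof (hnorm_nonneg HS a). pose proof (hnorm_nonneg HS b).
    pose proof (hnorm_nonneg HS (x -v mid)).
    assert (0 < / INR (Datatypes.S i) <= 1).
    { split. apply Rinv_0_lt_compat, lt_0_INR; lia.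
      rewrite <- Rinv_1. apply Rinv_le_contravar. lra. apply (le_INR 1). lia. }
    assert (0 < / INR (Datatypes.S j) <= 1).
    { split. apply Rinv_0_lt_compat, lt_0_INR; lia.
      rewrite <- Rinv_1. apply Rinv_le_contravar. lra. apply (le_INR 1). lia. }
    set (ei := / INR (Datatypes.S i)) in *. set (ej := / INR (Datatypes.S j)) in *.
    assert (nm (a)^2 <= (d + ei)^2) by (apply pow_incr; lra).
    assert (nm (b)^2 <= (d + ej)^2) by (apply pow_incr; lra).
    assert (d^2 <= nm (x -v mid)^2) by (apply pow_incr; lra).
    assert (Q1 : nsq HS (s i -v s j) = nsq HS (s j -v s i)) by (rewrite <- !hnorm_sq, sub_sym; auto).
    assert (Q2 : nsq HS (mid -v x) = nm (x -v mid) ^2) by (rewrite <- !hnorm_sq, sub_sym; auto).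
    rewrite Q1.
    assert (ei * ei <= ei) by nra. assert (ej * ej <= ej) by nra.
    nra. }
  destruct (complete_lim s) as [p Hp].
  { intros eps ep.
    destruct (archimed (8 * (d + 1) / (eps * eps))) as [Ha _].
    assert (0 <= IZR (up (8 * (d + 1) / (eps * eps)))).
    { apply Rlt_le, Rle_lt_trans with (8 * (d + 1) / (eps * eps)); auto.
      apply Rdiv_le_0_compat; nra. }
    exists (Z.to_nat (up (8 * (d + 1) / (eps * eps)))).
    intros i j Hi Hj.
    rewrite hnorm_nsq. rewrite <- (sqrt_Rsqr eps) by lra.
    apply sqrt_lt_1_alt. split. apply nsq_nonneg.
    eapply Rle_lt_trans. apply Hsq.
    set (N := Z.to_nat (up (8 * (d + 1) / (eps * eps)))) in *.
    assert (INR N = IZR (up (8 * (d + 1) / (eps * eps)))) as HN.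
    { unfold N. rewrite INR_IZR_INZ. rewrite Z2Nat.id. auto. apply le_IZR. auto. }
    assert (/ INR (Datatypes.S i) <= / INR (Datatypes.S N)).
    { apply Rinv_le_contravar. apply lt_0_INR; lia. apply le_INR; lia. }
    assert (/ INR (Datatypes.S j) <= / INR (Datatypes.S N)).
    { apply Rinv_le_contravar. apply lt_0_INR; lia. apply le_INR; lia. }
    assert (0 < INR (Datatypes.S N)) by (apply lt_0_INR; lia).
    rewrite !S_INR in *.
    apply Rle_lt_trans with (4 * (d + 1) * (2 / (INR N + 1))).
    apply Rmult_le_compat_l. lra. unfold Rdiv. lra.
    unfold Rsqr. 
    assert (8 * (d + 1) / (eps * eps) < INR N + 1) by lra.
    apply Rmult_lt_reg_r with ((INR N + 1) / (eps * eps)).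
    apply Rdiv_lt_0_compat; nra.
    replace (4 * (d + 1) * (2 / (INR N + 1)) * ((INR N + 1) / (eps * eps))) with
      (8 * (d + 1) / (eps * eps)) by (field; nra).
    replace (eps * eps * ((INR N + 1) / (eps * eps))) with (INR N + 1) by (field; nra).
    lra. }
  assert (Sp : S p) by (apply (Slim s); auto; intro n; apply Hs).
  assert (Hmin : forall s', S s' -> nsq HS (x -v p) <= nsq HS (x -v s')).
  { intros s' Ss'.
    assert (nm (x -v p) <= d).
    { apply Rnot_lt_le. intro Hc. set (e := nm (x -v p) - d).
      destruct (Hp (e / 2)) as [N HN]. unfold e; lra.
      destruct (archimed (2 / e)) as [Ha _].
      set (M := max N (Z.to_nat (up (2 / e)))).
      assert (INR (Datatypes.S M) > 2 / e).
      { apply Rlt_gt. apply Rlt_le_trans with (IZR (up (2 / e))). lra.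
        assert (0 <= IZR (up (2/e))). { apply Rlt_le, Rle_lt_trans with (2/e); auto.
          apply Rlt_le, Rdiv_lt_0_compat; unfold e; lra. }
        rewrite <- (Z2Nat.id (up (2/e))) by (apply le_IZR; auto).
        rewrite <- INR_IZR_INZ. apply le_INR. lia. }
      assert (/ INR (Datatypes.S M) < e / 2).
      { assert (0 < 2 / e) by (apply Rdiv_lt_0_compat; unfold e; lra).
        replace (e / 2) with (/ (2 / e)) by (field; unfold e; lra).
        apply Rinv_lt_contravar. nra. lra. }
      destruct (Hs M) as [_ HsM].
      pose proof (HN M ltac:(unfold M; lia)).
      pose proof (sub_tri x (s M) p). unfold e in *. lra. }
    rewrite <- !hnorm_sq. pose proof (Hlow s' Ss'). pose proof (hnorm_nonneg HS (x -v p)).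
    apply pow_incr. lra. }
  exists p. split; auto.
  intros s' Ss'.
  set (q := x -v p). set (c := [< s', q >]).
  assert (Hq : forall beta, S (p +v beta *v s') ) by (intro; apply Sadd; auto).
  set (t := / (nsq HS s' + 1)).
  assert (tp : 0 < t) by (unfold t; apply Rinv_0_lt_compat; pose proof (nsq_nonneg HS s'); lra).
  pose proof (Hmin _ (Hq (Cmult (RtoC t) (Cconj c)))) as Hm.
  replace (x -v (p +v Cmult (RtoC t) (Cconj c) *v s')) with (q +v -v (Cmult (RtoC t) (Cconj c) *v s')) in Hm
    by (unfold q; vec1).
  rewrite nsq_add, nsq_opp, nsq_scal, inner_opp_r, inner_scal_r in Hm.
  rewrite (hinner_conj _ HS q s') in Hm. fold c in Hm.
  rewrite Cmod_mult, Cmod_conj in Hm.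
  assert (Cmod (RtoC t) = t) as Ct.
  { rewrite Cmod_R. apply Rabs_pos_eq. lra. }
  rewrite Ct in Hm.
  assert (Re (Copp (Cmult (Cconj (Cmult (RtoC t) (Cconj c))) (Cconj c))) = - t * (Cmod c)^2) as Hr.
  { rewrite Cmod2_alt. destruct c as [c1 c2]. unfold Cconj, Cmult, Copp; simpl. ring. }
  rewrite Hr in Hm.
  assert (t * nsq HS s' < 1).
  { unfold t. apply Rmult_lt_reg_l with (nsq HS s' + 1). pose proof (nsq_nonneg HS s'); lra.
    field_simplify. lra. pose proof (nsq_nonneg HS s'); lra. }
  assert ((Cmod c)^2 <= 0).
  { pose proof (pow2_ge_0 (Cmod c)). 
    change (nsq HS (x -v p)) with (nsq HS q) in Hm.
    assert (0 <= t * (Cmod c)^2 * (t * nsq HS s' - 2)).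
    { replace (t * (Cmod c)^2 * (t * nsq HS s' - 2)) with
        ((t * Cmod c) ^ 2 * nsq HS s' + 2 * (- t * Cmod c ^ 2)) by ring. lra. }
    assert (0 <= t * (Cmod c)^2) by nra.
    assert (0 < 2 - t * nsq HS s') by lra.
    nra. }
  apply Cmod_eq_0. pose proof (Cmod_ge_0 c). nra.
Qed.

End Lim.

Local Open Scope R_scope.

Section Unit.
Context {H : Type} (HS : HilbertSpace H).

Local Notation "x +v y" := (hadd HS x y) (at level 50, left associativity).
Local Notation "a *v x" := (hscal HS a x) (at level 40, no associativity).
Local Notation "[< x , y >]" := (hinner HS x y).
Local Notation "0v" := (hzero HS).
Local Notation "-v x" := (hopp HS x) (at level 35).
Local Notation "x -v y" := (hsub HS x y) (at level 50, left associativity).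
Local Notation nm := (hnorm HS).

Ltac vec2 := apply (ext_inner HS); intro; unfold hsub;
  repeat rewrite ?hinner_add_l, ?hinner_scal_l, ?inner_opp_l, ?inner_0_l; ring.

Lemma C_eq (a b : C) : Re a = Re b -> Im a = Im b -> a = b.
Proof. destruct a, b; simpl; intros; subst; auto. Qed.

Lemma cmod_R_pos r : 0 <= r -> Cmod (RtoC r) = r.
Proof. intro. rewrite Cmod_R. apply Rabs_pos_eq; auto. Qed.

Context (U : H -> H) (HU : unitary HS U).

Lemma U_add x y : U (x +v y) = U x +v U y.
Proof. apply HU. Qed.
Lemma U_scal a x : U (a *v x) = a *v U x.
Proof. apply HU. Qed.
Lemma U_norm x : nm (U x) = nm x.
Proof. apply HU. Qed.
Lemma U_nsq x : nsq HS (U x) = nsq HS x.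
Proof. rewrite <- !hnorm_sq, U_norm. auto. Qed.
Lemma U_zero : U 0v = 0v.
Proof. transitivity (RtoC 0 *v U 0v). rewrite <- U_scal, scal_0_l. auto. apply scal_0_l. Qed.
Lemma U_opp x : U (-v x) = -v U x.
Proof. rewrite !opp_scal, U_scal. auto. Qed.
Lemma U_sub x y : U (x -v y) = U x -v U y.
Proof. unfold hsub. rewrite U_add, U_opp. auto. Qed.

Lemma U_inner_re x y : Re [< U x, U y >] = Re [< x, y >].
Proof.
  pose proof (U_nsq (x +v y)) as E. rewrite U_add, !nsq_add, !U_nsq in E. lra.
Qed.

Lemma U_inner x y : [< U x, U y >] = [< x, y >].
Proof.
  apply C_eq. apply U_inner_re.
  pose proof (U_inner_re x (Ci *v y)) as E.
  rewrite U_scal, !inner_scal_r in E.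
  destruct ([< U x, U y >]), ([< x, y >]). simpl in *. lra.
Qed.

Lemma U_inj x y : U x = U y -> x = y.
Proof.
  intro E. apply (sub_eq0_norm HS). rewrite <- U_norm, U_sub, E, sub_self. apply hnorm_zero.
Qed.

Definition Ui (y : H) : H :=
  proj1_sig (constructive_indefinite_description _ (proj2 (proj2 (proj2 HU)) y)).

Lemma U_Ui y : U (Ui y) = y.
Proof. unfold Ui. destruct (constructive_indefinite_description _ _). auto. Qed.

Lemma Ui_U x : Ui (U x) = x.
Proof. apply U_inj. apply U_Ui. Qed.

Lemma Ui_add x y : Ui (x +v y) = Ui x +v Ui y.
Proof. apply U_inj. rewrite U_add, !U_Ui. auto. Qed.
Lemma Ui_scal a x : Ui (a *v x) = a *v Ui x.
Proof. apply U_inj. rewrite U_scal, !U_Ui. auto. Qed.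
Lemma Ui_sub x y : Ui (x -v y) = Ui x -v Ui y.
Proof. apply U_inj. rewrite U_sub, !U_Ui. auto. Qed.
Lemma Ui_norm x : nm (Ui x) = nm x.
Proof. rewrite <- (U_Ui x) at 2. rewrite U_norm. auto. Qed.
Lemma Ui_zero : Ui 0v = 0v.
Proof. apply U_inj. rewrite U_Ui, U_zero. auto. Qed.
Lemma U_adj x y : [< U x, y >] = [< x, Ui y >].
Proof. rewrite <- (U_Ui y) at 1. apply U_inner. Qed.
Lemma Ui_adj x y : [< Ui x, y >] = [< x, U y >].
Proof. rewrite <- (U_Ui x) at 2. rewrite U_inner. auto. Qed.

Lemma res_ex z v : Cmod z < 1 -> exists k, k -v z *v Ui k = v.
Proof.
  intro Hz.
  destruct (fixed_point HS (fun k => v +v z *v Ui k) (Cmod z)) as [k Hk].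
  { split; auto. apply Cmod_ge_0. }
  { intros a b. right.
    replace ((v +v z *v Ui a) -v (v +v z *v Ui b)) with (z *v (Ui (a -v b))).
    rewrite hnorm_scal, Ui_norm. auto. rewrite Ui_sub. vec2. }
  exists k. rewrite <- Hk at 1. vec2.
Qed.

Definition Res (z : C) (v : H) : H :=
  match Rlt_dec (Cmod z) 1 with
  | left h => proj1_sig (constructive_indefinite_description _ (res_ex z v h))
  | right _ => 0v
  end.

Lemma R_spec z v : Cmod z < 1 -> Res z v -v z *v Ui (Res z v) = v.
Proof.
  intro h. unfold Res. destruct (Rlt_dec (Cmod z) 1); [|lra].
  destruct (constructive_indefinite_description _ _). auto.
Qed.

Lemma res_uniq0 z d : Cmod z < 1 -> d -v z *v Ui d = 0v -> d = 0v.
Proof.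
  intros Hz E. apply (hsub_eq0 HS) in E. apply (hnorm_0_eq HS).
  assert (nm d = Cmod z * nm d) by (rewrite E at 1; rewrite hnorm_scal, Ui_norm; auto).
  pose proof (hnorm_nonneg HS d). pose proof (Cmod_ge_0 z). nra.
Qed.

Lemma R_uniq z v k : Cmod z < 1 -> k -v z *v Ui k = v -> k = Res z v.
Proof.
  intros Hz E. apply (hsub_eq0 HS). apply (res_uniq0 z); auto.
  rewrite Ui_sub. pose proof (R_spec z v Hz) as F.
  transitivity ((k -v z *v Ui k) -v (Res z v -v z *v Ui (Res z v))). vec2.
  rewrite E, F. apply sub_self.
Qed.

Lemma R_bound z v : Cmod z < 1 -> (1 - Cmod z) * nm (Res z v) <= nm v.
Proof.
  intro Hz. pose proof (R_spec z v Hz) as F.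
  set (k := Res z v) in *. rewrite <- F.
  pose proof (hnorm_triangle HS (k -v z *v Ui k) (z *v Ui k)).
  replace (k -v z *v Ui k +v z *v Ui k) with k in H0 by vec2.
  rewrite hnorm_scal, Ui_norm in H0. lra.
Qed.

Lemma R_add z v w : Cmod z < 1 -> Res z (v +v w) = Res z v +v Res z w.
Proof.
  intro Hz. symmetry. apply R_uniq; auto. rewrite Ui_add.
  transitivity ((Res z v -v z *v Ui (Res z v)) +v (Res z w -v z *v Ui (Res z w))). vec2.
  rewrite !R_spec; auto.
Qed.

Lemma R_scal z a v : Cmod z < 1 -> Res z (a *v v) = a *v Res z v.
Proof.
  intro Hz. symmetry. apply R_uniq; auto. rewrite Ui_scal.
  transitivity (a *v (Res z v -v z *v Ui (Res z v))). vec2.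
  rewrite !R_spec; auto.
Qed.

Lemma R_sub z v w : Cmod z < 1 -> Res z (v -v w) = Res z v -v Res z w.
Proof.
  intro Hz. symmetry. apply R_uniq; auto. rewrite Ui_sub.
  transitivity ((Res z v -v z *v Ui (Res z v)) -v (Res z w -v z *v Ui (Res z w))). vec2.
  rewrite !R_spec; auto.
Qed.

Lemma R_U z v : Cmod z < 1 -> U (Res z v) -v z *v Res z v = U v.
Proof.
  intro Hz. pose proof (R_spec z v Hz) as F.
  transitivity (U (Res z v -v z *v Ui (Res z v))).
  rewrite U_sub, U_scal, U_Ui. auto. rewrite F. auto.
Qed.

Lemma R_of_U z k v : Cmod z < 1 -> U k -v z *v k = U v -> k = Res z v.
Proof.
  intros Hz E. apply R_uniq; auto. apply U_inj. rewrite U_sub, U_scal, U_Ui. auto.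
Qed.

Lemma R_resolvent z z' v : Cmod z < 1 -> Cmod z' < 1 ->
  Res z' v -v Res z v = Cminus z' z *v Res z' (Ui (Res z v)).
Proof.
  intros Hz Hz'. rewrite <- R_scal by auto. apply R_uniq; auto.
  rewrite Ui_sub.
  pose proof (R_spec z v Hz) as F. pose proof (R_spec z' v Hz') as F'.
  transitivity ((Res z' v -v z' *v Ui (Res z' v)) -v (Res z v -v z *v Ui (Res z v))
                 -v Cminus z z' *v Ui (Res z v)).
  { apply (ext_inner HS); intro; unfold hsub;
    repeat rewrite ?hinner_add_l, ?hinner_scal_l, ?inner_opp_l, ?inner_0_l. unfold Cminus. ring. }
  rewrite F, F', sub_self.
  apply (ext_inner HS); intro; unfold hsub;
    repeat rewrite ?hinner_add_l, ?hinner_scal_l, ?inner_opp_l, ?inner_0_l. unfold Cminus. ring.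
Qed.

End Unit.

Local Open Scope R_scope.

Lemma Cmod_re_le c : Rabs (Re c) <= Cmod c.
Proof. apply re_le_Cmod. Qed.

Lemma Cmod_im_le c : Rabs (Im c) <= Cmod c.
Proof.
  destruct c as [a b]. unfold Cmod; simpl.
  rewrite <- sqrt_Rsqr_abs. apply sqrt_le_1_alt. unfold Rsqr. nra.
Qed.

Lemma Cmod_le_sum c : Cmod c <= Rabs (Re c) + Rabs (Im c).
Proof.
  destruct c as [a b]. unfold Cmod; simpl.
  rewrite <- (sqrt_Rsqr (Rabs a + Rabs b)) by (pose proof (Rabs_pos a); pose proof (Rabs_pos b); lra).
  apply sqrt_le_1_alt. unfold Rsqr.
  pose proof (Rabs_pos a); pose proof (Rabs_pos b).
  assert (Rabs a * Rabs a = a * a) by (rewrite <- Rabs_mult; apply Rabs_pos_eq; nra).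
  assert (Rabs b * Rabs b = b * b) by (rewrite <- Rabs_mult; apply Rabs_pos_eq; nra).
  nra.
Qed.

Lemma Cmod_minus_sym a b : Cmod (Cminus a b) = Cmod (Cminus b a).
Proof. rewrite <- Cmod_opp. f_equal. ring. Qed.

Lemma Cmod_rev_tri a b : Cmod a - Cmod b <= Cmod (Cminus a b).
Proof.
  pose proof (Cmod_triangle (Cminus a b) b).
  replace (Cplus (Cminus a b) b) with a in H by ring. lra.
Qed.

Lemma Cmod_tri3 a b c : Cmod (Cminus a c) <= Cmod (Cminus a b) + Cmod (Cminus b c).
Proof.
  pose proof (Cmod_triangle (Cminus a b) (Cminus b c)).
  replace (Cplus (Cminus a b) (Cminus b c)) with (Cminus a c) in H by ring. lra.
Qed.

Lemma Cmod_tri_minus a b : Cmod (Cminus a b) <= Cmod a + Cmod b.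
Proof.
  unfold Cminus. pose proof (Cmod_triangle a (Copp b)). rewrite Cmod_opp in H. auto.
Qed.

Lemma unit_conj_l z : Cmod z = 1 -> Cmult (Cconj z) z = RtoC 1.
Proof.
  intro E. rewrite Cmult_comm, <- Cmod2_conj, E. apply injective_projections; simpl; ring.
Qed.

Lemma unit_conj_r z : Cmod z = 1 -> Cmult z (Cconj z) = RtoC 1.
Proof. intro E. rewrite <- Cmod2_conj, E. apply injective_projections; simpl; ring. Qed.

Lemma Cmod_RtoC r : 0 <= r -> Cmod (RtoC r) = r.
Proof. intro. rewrite Cmod_R. apply Rabs_pos_eq; auto. Qed.

Lemma Cmod_RtoC_abs r : Cmod (RtoC r) = Rabs r.
Proof. apply Cmod_R. Qed.

Lemma Cneq0_Cmod c : c <> RtoC 0 -> 0 < Cmod c.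
Proof. intro. apply Cmod_gt_0. auto. Qed.

Lemma Cmod_pos_neq c : 0 < Cmod c -> c <> RtoC 0.
Proof. intros H E. subst. rewrite Cmod_0 in H. lra. Qed.

Lemma Cmod_sub_unit z z0 : Cmod z0 = 1 -> 1 - Cmod z <= Cmod (Cminus z z0).
Proof.
  intro E. rewrite Cmod_minus_sym. pose proof (Cmod_rev_tri z0 z). lra.
Qed.

Lemma Cmod_mult_unit z0 c : Cmod z0 = 1 -> Cmod (Cmult z0 c) = Cmod c.
Proof. intro. rewrite Cmod_mult, H. ring. Qed.

Lemma one_minus_unit z z0 : Cmod z0 = 1 ->
  Cmod (Cminus (RtoC 1) (Cmult z (Cconj z0))) = Cmod (Cminus z z0).
Proof.
  intro E.
  replace (Cminus (RtoC 1) (Cmult z (Cconj z0))) with (Cmult (Cconj z0) (Cminus z0 z)).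
  rewrite Cmod_mult, Cmod_conj, E, Rmult_1_l, Cmod_minus_sym. auto.
  rewrite <- (unit_conj_l z0 E). ring.
Qed.

Lemma one_minus_unit_nz z z0 : Cmod z0 = 1 -> Cmod z < 1 ->
  Cminus (RtoC 1) (Cmult z (Cconj z0)) <> RtoC 0.
Proof.
  intros E Hz. apply Cmod_pos_neq. rewrite one_minus_unit by auto.
  pose proof (Cmod_sub_unit z z0 E). lra.
Qed.

Local Open Scope R_scope.

Lemma inv_deriv (A : C -> C) z Ad K rho : 0 < rho -> 0 <= K ->
  1/2 <= Cmod (A z) ->
  (forall z', Cmod z' < 1 -> Cmod (Cminus z' z) < rho ->
     1/2 <= Cmod (A z') /\
     Cmod (Cminus (Cminus (A z') (A z)) (Cmult (Cminus z' z) Ad)) <= K * Cmod (Cminus z' z) ^ 2) ->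
  disc_derivative (fun z => Cminus (RtoC 1) (Cinv (A z))) z (Cdiv Ad (Cmult (A z) (A z))).
Proof.
  intros rp Kp Az HA eps ep.
  set (a := A z) in *.
  set (P := K * Cmod a + Cmod Ad * (Cmod Ad + K * rho)).
  assert (Pp : 0 <= P) by (unfold P; pose proof (Cmod_ge_0 a); pose proof (Cmod_ge_0 Ad);
    apply Rplus_le_le_0_compat; apply Rmult_le_pos; nra).
  set (Q := 2 * P / (Cmod a)^2).
  assert (ap : 0 < Cmod a) by lra.
  assert (Qp : 0 <= Q) by (unfold Q; apply Rdiv_le_0_compat; nra).
  exists (Rmin rho (eps / (Q + 1))). split.
  { apply Rmin_pos; auto. apply Rdiv_lt_0_compat; lra. }
  intros w Hw Hwz Hd.
  assert (Hd1 : Cmod (Cminus w z) < rho) by (eapply Rlt_le_trans; [apply Hd| apply Rmin_l]).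
  assert (Hd2 : Cmod (Cminus w z) < eps / (Q + 1)) by (eapply Rlt_le_trans; [apply Hd| apply Rmin_r]).
  destruct (HA w Hw Hd1) as [Bw HE].
  set (b := A w) in *. set (h := Cminus w z) in *.
  set (E := Cminus (Cminus b a) (Cmult h Ad)) in *.
  assert (hnz : h <> RtoC 0).
  { intro Eh. apply Hwz. unfold h in Eh. apply Ceq_minus in Eh. auto. }
  assert (anz : a <> RtoC 0) by (apply Cmod_pos_neq; lra).
  assert (bnz : b <> RtoC 0) by (apply Cmod_pos_neq; lra).
  assert (hp : 0 < Cmod h) by (apply Cneq0_Cmod; auto).
  assert (Eq : Cminus (Cdiv (Cminus (Cminus (RtoC 1) (Cinv b)) (Cminus (RtoC 1) (Cinv a))) h)
                  (Cdiv Ad (Cmult a a)) =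
               Cdiv (Cminus (Cmult E a) (Cmult (Cmult h Ad) (Cminus b a)))
                    (Cmult h (Cmult (Cmult a a) b))).
  { unfold E. field. repeat split; auto. }
  rewrite Eq. rewrite Cmod_div.
  2: { repeat apply Cmult_neq_0; auto. }
  rewrite !Cmod_mult.
  assert (Hnum : Cmod (Cminus (Cmult E a) (Cmult (Cmult h Ad) (Cminus b a))) <= Cmod h ^ 2 * P).
  { eapply Rle_trans. apply Cmod_tri_minus. rewrite !Cmod_mult.
    assert (Cmod (Cminus b a) <= Cmod h * Cmod Ad + K * Cmod h ^ 2).
    { replace (Cminus b a) with (Cplus E (Cmult h Ad)) by (unfold E; ring).
      eapply Rle_trans. apply Cmod_triangle. rewrite Cmod_mult. lra. }
    unfold P. pose proof (Cmod_ge_0 E). pose proof (Cmod_ge_0 Ad).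
    assert (Cmod E * Cmod a <= K * Cmod h ^2 * Cmod a) by (apply Rmult_le_compat_r; lra).
    assert (Cmod h * Cmod Ad * Cmod (Cminus b a) <= Cmod h * Cmod Ad * (Cmod h * Cmod Ad + K * Cmod h ^ 2))
      by (apply Rmult_le_compat_l; nra).
    assert (Cmod h * Cmod Ad * (K * Cmod h ^ 2) <= Cmod h * Cmod Ad * (K * Cmod h * rho)).
    { apply Rmult_le_compat_l. nra. simpl. rewrite Rmult_1_r.
      replace (K * (Cmod h * Cmod h)) with ((K * Cmod h) * Cmod h) by ring.
      apply Rmult_le_compat_l; nra. }
    nra. }
  apply Rle_lt_trans with (Cmod h ^ 2 * P / (Cmod h * (Cmod a * Cmod a * (1/2)))).
  { unfold Rdiv. apply Rmult_le_compat. apply Cmod_ge_0.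
    left. apply Rinv_0_lt_compat. repeat apply Rmult_lt_0_compat; nra.
    auto. apply Rinv_le_contravar. repeat apply Rmult_lt_0_compat; nra.
    apply Rmult_le_compat_l. lra. apply Rmult_le_compat_l; nra. }
  replace (Cmod h ^ 2 * P / (Cmod h * (Cmod a * Cmod a * (1 / 2)))) with (Cmod h * Q)
    by (unfold Q; field; lra).
  apply Rle_lt_trans with (Cmod h * (Q + 1)). nra.
  apply Rmult_lt_reg_r with (/ (Q + 1)). apply Rinv_0_lt_compat; lra.
  rewrite Rmult_assoc, Rinv_r, Rmult_1_r by lra. auto.
Qed.

Section AW.
Context {H : Type} (HS : HilbertSpace H).

Local Notation "x +v y" := (hadd HS x y) (at level 50, left associativity).
Local Notation "a *v x" := (hscal HS a x) (at level 40, no associativity).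
Local Notation "[< x , y >]" := (hinner HS x y).
Local Notation "0v" := (hzero HS).
Local Notation "-v x" := (hopp HS x) (at level 35).
Local Notation "x -v y" := (hsub HS x y) (at level 50, left associativity).
Local Notation nm := (hnorm HS).

Lemma inner_sub_l x y v : [< x -v y, v >] = Cminus [< x, v >] [< y, v >].
Proof. unfold hsub. rewrite hinner_add_l, inner_opp_l. ring. Qed.

Lemma inner_sub_r x y v : [< v, x -v y >] = Cminus [< v, x >] [< v, y >].
Proof. unfold hsub. rewrite inner_add_r, inner_opp_r. ring. Qed.

Context (U : H -> H) (HU : unitary HS U) (psi : H) (Hpsi : nsq HS psi = 1).

Local Notation Rz := (Res HS U HU).
Local Notation Uin := (Ui HS U HU).

Lemma nm_psi : nm psi = 1.
Proof. rewrite hnorm_nsq, Hpsi. apply sqrt_1. Qed.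

Lemma inner_psi_le x : Cmod [< x, psi >] <= nm x.
Proof. pose proof (CS HS x psi). rewrite nm_psi, Rmult_1_r in H0. auto. Qed.

Lemma R_bound' z v : Cmod z < 1 -> nm (Rz z v) <= nm v / (1 - Cmod z).
Proof.
  intro Hz. pose proof (R_bound HS U HU z v Hz).
  apply Rmult_le_reg_l with (1 - Cmod z). lra.
  replace ((1 - Cmod z) * (nm v / (1 - Cmod z))) with (nm v) by (field; lra). auto.
Qed.

Definition Af z := [< Rz z psi, psi >].
Definition Wf z := Cminus (RtoC 1) (Cinv (Af z)).
Definition Adf z := [< Rz z (Uin (Rz z psi)), psi >].

Lemma A_re z : Cmod z < 1 -> 2 * Re (Af z) - 1 = (1 - Cmod z ^ 2) * nsq HS (Rz z psi).
Proof.
  intro Hz. pose proof (R_spec HS U HU z psi Hz) as F.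
  set (k := Rz z psi) in *. unfold Af. fold k.
  assert (E1 : nsq HS psi = nsq HS k + Cmod z ^ 2 * nsq HS k - 2 * Re (Cmult (Cconj z) [< k, Uin k >])).
  { rewrite <- F. unfold hsub at 1. rewrite nsq_add, nsq_opp, nsq_scal.
    rewrite <- (hnorm_sq HS (Uin k)), Ui_norm, hnorm_sq.
    rewrite inner_opp_r, inner_scal_r, re_opp. ring. }
  rewrite <- F. rewrite inner_sub_r, inner_scal_r, inner_self.
  rewrite Hpsi in E1.
  destruct (Cmult (Cconj z) [< k, Uin k >]) as [c1 c2] eqn:Ec.
  simpl in E1 |- *. lra.
Qed.

Lemma R_psi_nz z : Cmod z < 1 -> Rz z psi <> 0v.
Proof.
  intros Hz E. pose proof (R_spec HS U HU z psi Hz) as F.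
  rewrite E, Ui_zero, scal_0_r, sub_self in F.
  rewrite <- F, nsq_zero in Hpsi. lra.
Qed.

Lemma A_re_gt z : Cmod z < 1 -> 1/2 < Re (Af z).
Proof.
  intro Hz. pose proof (A_re z Hz).
  assert (0 < nsq HS (Rz z psi)).
  { destruct (nsq_nonneg HS (Rz z psi)); auto. exfalso. apply (R_psi_nz z Hz).
    apply nsq_0. auto. }
  assert (Cmod z ^ 2 < 1). { pose proof (Cmod_ge_0 z). nra. }
  nra.
Qed.

Lemma A_mod_ge z : Cmod z < 1 -> 1/2 <= Cmod (Af z).
Proof.
  intro Hz. pose proof (A_re_gt z Hz). pose proof (re_le_cmod (Af z)). lra.
Qed.

Lemma A_nz z : Cmod z < 1 -> Af z <> RtoC 0.
Proof. intro Hz. apply Cmod_pos_neq. pose proof (A_mod_ge z Hz). lra. Qed.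

Lemma A_bound z : Cmod z < 1 -> Cmod (Af z) <= nm (Rz z psi).
Proof. intro. apply inner_psi_le. Qed.

Lemma one_minus_W z : Cmod z < 1 -> Cminus (RtoC 1) (Wf z) = Cinv (Af z).
Proof. intro. unfold Wf. ring. Qed.

Lemma A_taylor z z' : Cmod z < 1 -> Cmod z' < 1 ->
  Cminus (Cminus (Af z') (Af z)) (Cmult (Cminus z' z) (Adf z)) =
  Cmult (Cmult (Cminus z' z) (Cminus z' z))
    [< Rz z' (Uin (Rz z (Uin (Rz z psi)))), psi >].
Proof.
  intros Hz Hz'. unfold Af, Adf.
  set (X := Uin (Rz z psi)).
  assert (E1 : Cminus [< Rz z' psi, psi >] [< Rz z psi, psi >] = Cmult (Cminus z' z) [< Rz z' X, psi >]).
  { rewrite <- inner_sub_l, R_resolvent by auto. rewrite hinner_scal_l. auto. }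
  assert (E2 : Cminus [< Rz z' X, psi >] [< Rz z X, psi >] = Cmult (Cminus z' z) [< Rz z' (Uin (Rz z X)), psi >]).
  { rewrite <- inner_sub_l, R_resolvent by auto. rewrite hinner_scal_l. auto. }
  rewrite E1. replace (Cmult (Cmult (Cminus z' z) (Cminus z' z)) [< Rz z' (Uin (Rz z X)), psi >])
    with (Cmult (Cminus z' z) (Cmult (Cminus z' z) [< Rz z' (Uin (Rz z X)), psi >])) by ring.
  rewrite <- E2. ring.
Qed.

Lemma W_deriv z : Cmod z < 1 ->
  disc_derivative Wf z (Cdiv (Adf z) (Cmult (Af z) (Af z))).
Proof.
  intro Hz. unfold Wf.
  set (r0 := 1 - Cmod z). assert (r0p : 0 < r0) by (unfold r0; lra).
  apply (inv_deriv Af z (Adf z) (2 / (r0 ^ 3)) (r0 / 2)).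
  lra. apply Rdiv_le_0_compat. lra. apply pow_lt; auto. apply A_mod_ge; auto.
  intros z' Hz' Hd. split. apply A_mod_ge; auto.
  rewrite A_taylor by auto. rewrite !Cmod_mult.
  assert (1 - Cmod z' >= r0 / 2).
  { pose proof (Cmod_rev_tri z' z). unfold r0 in *. lra. }
  assert (B : Cmod [< Rz z' (Uin (Rz z (Uin (Rz z psi)))), psi >] <= 2 / r0 ^ 3).
  { eapply Rle_trans. apply inner_psi_le.
    eapply Rle_trans. apply R_bound'; auto.
    rewrite Ui_norm.
    assert (nm (Rz z (Uin (Rz z psi))) <= 1 / r0 ^ 2).
    { eapply Rle_trans. apply R_bound'; auto. rewrite Ui_norm. fold r0.
      eapply Rle_trans. apply Rmult_le_compat_r. left; apply Rinv_0_lt_compat; auto.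
      apply R_bound'; auto. rewrite nm_psi. fold r0. right. field. lra. }
    apply Rle_trans with ((1 / r0 ^ 2) / (r0 / 2)).
    unfold Rdiv. apply Rmult_le_compat. apply hnorm_nonneg. left; apply Rinv_0_lt_compat; lra.
    unfold Rdiv in H1. auto. apply Rinv_le_contravar; lra.
    right. field. lra. }
  pose proof (Cmod_ge_0 (Cminus z' z)).
  replace (Cmod (Cminus z' z) ^ 2) with (Cmod (Cminus z' z) * Cmod (Cminus z' z)) by ring.
  rewrite Rmult_comm. apply Rmult_le_compat_r. nra. auto.
Qed.

End AW.

Local Open Scope R_scope.

Section Eig.
Context {H : Type} (HS : HilbertSpace H).

Local Notation "x +v y" := (hadd HS x y) (at level 50, left associativity).
Local Notation "a *v x" := (hscal HS a x) (at level 40, no associativity).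
Local Notation "[< x , y >]" := (hinner HS x y).
Local Notation "0v" := (hzero HS).
Local Notation "-v x" := (hopp HS x) (at level 35).
Local Notation "x -v y" := (hsub HS x y) (at level 50, left associativity).
Local Notation nm := (hnorm HS).

Ltac vec5 := apply (ext_inner HS); intro; unfold hsub;
  repeat rewrite ?hinner_add_l, ?hinner_scal_l, ?inner_opp_l, ?inner_0_l; ring.

Lemma clos_orth (T : H -> Prop) q p :
  (forall y, T y -> [< y, q >] = RtoC 0) -> closure HS T p -> [< p, q >] = RtoC 0.
Proof.
  intros HT Hp. apply Cmod_eq_0.
  pose proof (Cmod_ge_0 ([< p, q >])).
  destruct (Req_dec (Cmod [< p, q >]) 0); auto. exfalso.
  set (e := Cmod [< p, q >]) in *.
  pose proof (hnorm_nonneg HS q).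
  destruct (Hp (e / (nm q + 1))) as [y [Ty Hy]]. apply Rdiv_lt_0_compat; lra.
  assert (E : [< p, q >] = Cplus [< p -v y, q >] [< y, q >]).
  { rewrite inner_sub_l. ring. }
  rewrite (HT y Ty) in E.
  assert (e <= nm (p -v y) * nm q).
  { unfold e. rewrite E. rewrite Cplus_0_r. apply CS. }
  assert (nm (p -v y) * nm q <= e / (nm q + 1) * nm q).
  { apply Rmult_le_compat_r; lra. }
  assert (e / (nm q + 1) * nm q < e).
  { replace (e / (nm q + 1) * nm q) with (e - e / (nm q + 1)) by (field; lra).
    assert (0 < e / (nm q + 1)) by (apply Rdiv_lt_0_compat; lra). lra. }
  lra.
Qed.

Context (U : H -> H) (HU : unitary HS U) (z0 : C) (Hz0 : Cmod z0 = 1).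

Local Notation Rz := (Res HS U HU).
Local Notation Uin := (Ui HS U HU).

Definition ranU (y : H) : Prop := exists g, y = U g -v z0 *v g.
Definition clos := closure HS ranU.

Lemma clos_closed : closed_subspace HS clos.
Proof.
  apply closure_closed.
  - exists 0v. rewrite (U_zero HS U HU), scal_0_r, sub_self. auto.
  - intros x y Hx Hy. destruct Hx as [g1 Hg1]. destruct Hy as [g2 Hg2]. subst x y.
    exists (g1 +v g2). rewrite (U_add HS U HU). vec5.
  - intros a x Hx. destruct Hx as [g Hg]. subst x. exists (a *v g). rewrite (U_scal HS U HU). vec5.
Qed.

Lemma Ui_eig h : U h = z0 *v h -> Uin h = Cconj z0 *v h.
Proof.
  intro E. apply (U_inj HS U HU). rewrite (U_Ui HS U HU), (U_scal HS U HU), E, hscal_assoc, unit_conj_l by auto.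
  rewrite hscal_one. auto.
Qed.

Lemma eig_orth h : U h = z0 *v h -> forall y, ranU y -> [< y, h >] = RtoC 0.
Proof.
  intros E y [g ->]. rewrite inner_sub_l, (U_adj HS U HU), Ui_eig by auto.
  rewrite inner_scal_r, hinner_scal_l, Cconj_conj. ring.
Qed.

Lemma orth_eig q : (forall y, ranU y -> [< y, q >] = RtoC 0) -> U q = z0 *v q.
Proof.
  intro Hq. apply (hsub_eq0 HS). apply nsq_0.
  assert (E : [< U q -v z0 *v q, q >] = RtoC 0) by (apply Hq; exists q; auto).
  rewrite inner_sub_l, hinner_scal_l, inner_self in E.
  unfold hsub. rewrite nsq_add, nsq_opp, nsq_scal, (U_nsq HS U HU), Hz0, inner_opp_r, inner_scal_r.
  assert (E2 : [< U q, q >] = Cmult z0 (RtoC (nsq HS q))).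
  { apply Ceq_minus. auto. }
  rewrite E2. rewrite Cmult_assoc, unit_conj_l by auto. simpl. ring.
Qed.

Lemma decomp_v v : exists p q, clos p /\ U q = z0 *v q /\ v = p +v q.
Proof.
  destruct (projection HS clos clos_closed v) as [p [Cp Op]].
  exists p, (v -v p). split; auto. split.
  - apply orth_eig. intros y Ry. apply Op. apply closure_incl. auto.
  - vec5.
Qed.

Lemma R_ran z g : Cmod z < 1 -> Rz z (U g -v z0 *v g) = U g +v Cminus z z0 *v Rz z g.
Proof.
  intro Hz. symmetry. apply (R_uniq HS U HU); auto.
  rewrite (Ui_add HS U HU), (Ui_scal HS U HU), (Ui_U HS U HU).
  pose proof (R_spec HS U HU z g Hz) as F.
  transitivity (U g -v z *v g +v Cminus z z0 *v (Rz z g -v z *v Uin (Rz z g))).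
  { apply (ext_inner HS); intro; unfold hsub;
    repeat rewrite ?hinner_add_l, ?hinner_scal_l, ?inner_opp_l, ?inner_0_l. unfold Cminus. ring. }
  rewrite F.
  apply (ext_inner HS); intro; unfold hsub;
    repeat rewrite ?hinner_add_l, ?hinner_scal_l, ?inner_opp_l, ?inner_0_l. unfold Cminus. ring.
Qed.

Lemma E1_est p : clos p -> forall eps, 0 < eps -> exists del, 0 < del /\
  forall z, Cmod z < 1 -> Cmod (Cminus z z0) < del -> (1 - Cmod z) * nm (Rz z p) < eps.
Proof.
  intros Hp eps ep.
  destruct (Hp (eps / 2)) as [y [[g ->] Hy]]. lra.
  set (G := nm g). assert (Gp : 0 <= G) by apply hnorm_nonneg.
  exists (eps / (4 * (G + 1))). split. apply Rdiv_lt_0_compat; lra.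
  intros z Hz Hd.
  assert (r0 : 0 < 1 - Cmod z) by lra.
  assert (Hsub : 1 - Cmod z <= Cmod (Cminus z z0)) by (apply Cmod_sub_unit; auto).
  replace p with ((p -v (U g -v z0 *v g)) +v (U g -v z0 *v g)) by vec5.
  rewrite (R_add HS U HU), R_ran by auto.
  assert (B1 : (1 - Cmod z) * nm (Rz z (p -v (U g -v z0 *v g))) <= nm (p -v (U g -v z0 *v g)))
    by (apply (R_bound HS U HU); auto).
  assert (B2 : nm (U g +v Cminus z z0 *v Rz z g) <= G + Cmod (Cminus z z0) * (G / (1 - Cmod z))).
  { eapply Rle_trans. apply hnorm_triangle. rewrite (U_norm HS U HU), hnorm_scal.
    apply Rplus_le_compat_l. apply Rmult_le_compat_l. apply Cmod_ge_0.
    apply (R_bound' HS U HU); auto. }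
  eapply Rle_lt_trans. apply Rmult_le_compat_l. lra. apply hnorm_triangle.
  rewrite Rmult_plus_distr_l.
  assert ((1 - Cmod z) * (G + Cmod (Cminus z z0) * (G / (1 - Cmod z))) <= 2 * Cmod (Cminus z z0) * G).
  { replace ((1 - Cmod z) * (G + Cmod (Cminus z z0) * (G / (1 - Cmod z)))) with
      ((1 - Cmod z) * G + Cmod (Cminus z z0) * G) by (field; lra). nra. }
  assert ((1 - Cmod z) * nm (U g +v Cminus z z0 *v Rz z g) <=
          (1 - Cmod z) * (G + Cmod (Cminus z z0) * (G / (1 - Cmod z)))) by
    (apply Rmult_le_compat_l; lra).
  assert (2 * Cmod (Cminus z z0) * G < eps / 2).
  { assert (Cmod (Cminus z z0) * (G + 1) < eps / 4).
    { apply Rmult_lt_reg_r with (/ (G + 1)). apply Rinv_0_lt_compat; lra.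
      rewrite Rmult_assoc, Rinv_r, Rmult_1_r by lra.
      replace (eps / 4 * / (G + 1)) with (eps / (4 * (G + 1))) by (field; lra). auto. }
    pose proof (Cmod_ge_0 (Cminus z z0)). nra. }
  lra.
Qed.

End Eig.

Local Open Scope R_scope.

Lemma Cmod_rz t z0 : Cmod z0 = 1 -> Cmod (Cmult (RtoC t) z0) = Rabs t.
Proof. intro E. rewrite Cmod_mult, E, Cmod_R. ring. Qed.

Lemma radial_deriv_part (P : C -> R) (f : C -> C) z0 c d :
  (forall a b : C, P (Cminus a b) = P a - P b) ->
  (forall (a : C) (r : R), r <> 0 -> P (Cdiv a (RtoC r)) = P a / r) ->
  (forall a : C, Rabs (P a) <= Cmod a) ->
  Cmod z0 = 1 -> 0 < c < 1 ->
  disc_derivative f (Cmult (RtoC c) z0) d ->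
  derivable_pt_lim (fun t => P (f (Cmult (RtoC t) z0))) c (P (Cmult z0 d)).
Proof.
  intros Pminus Pdiv Pabs Hz0 Hc Hd eps ep.
  destruct (Hd eps ep) as [del [delp Hdel]].
  assert (mp : 0 < Rmin del (Rmin c (1 - c))).
  { apply Rmin_pos; auto. apply Rmin_pos; lra. }
  exists (mkposreal _ mp). intros h hnz hlt. simpl in hlt.
  assert (h1 : Rabs h < del) by (eapply Rlt_le_trans; [apply hlt|apply Rmin_l]).
  assert (h2 : Rabs h < Rmin c (1 - c)) by (eapply Rlt_le_trans; [apply hlt|apply Rmin_r]).
  assert (h3 : Rabs h < c) by (eapply Rlt_le_trans; [apply h2|apply Rmin_l]).
  assert (h4 : Rabs h < 1 - c) by (eapply Rlt_le_trans; [apply h2|apply Rmin_r]).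
  set (w := Cmult (RtoC (c + h)) z0).
  assert (Ew : Cminus w (Cmult (RtoC c) z0) = Cmult (RtoC h) z0).
  { unfold w. rewrite RtoC_plus. ring. }
  assert (Hw : Cmod w < 1).
  { unfold w. rewrite Cmod_rz by auto. apply Rabs_def1; apply Rabs_def2 in h3; apply Rabs_def2 in h4; lra. }
  assert (z0nz : z0 <> RtoC 0) by (apply Cmod_pos_neq; lra).
  assert (hC : RtoC h <> RtoC 0) by (intro E; apply hnz; injection E; auto).
  assert (Hne : w <> Cmult (RtoC c) z0).
  { intro E. assert (Cminus w (Cmult (RtoC c) z0) = RtoC 0) by (rewrite E; ring).
    rewrite Ew in H. apply Cmult_neq_0 in H; auto. }
  assert (Hmod : Cmod (Cminus w (Cmult (RtoC c) z0)) < del).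
  { rewrite Ew, Cmod_rz by auto. auto. }
  specialize (Hdel w Hw Hne Hmod).
  rewrite Ew in Hdel.
  set (D := Cminus (f w) (f (Cmult (RtoC c) z0))) in *.
  assert (E2 : Cminus (Cdiv D (RtoC h)) (Cmult z0 d) = Cmult z0 (Cminus (Cdiv D (Cmult (RtoC h) z0)) d)).
  { field. auto. }
  replace ((P (f w) - P (f (Cmult (RtoC c) z0))) / h - P (Cmult z0 d))
    with (P (Cminus (Cdiv D (RtoC h)) (Cmult z0 d))).
  2: { rewrite Pminus, (Pdiv _ _ hnz). unfold D. rewrite Pminus. auto. }
  eapply Rle_lt_trans. apply Pabs. rewrite E2, Cmod_mult, Hz0, Rmult_1_l. auto.
Qed.

Lemma P_re_minus (a b : C) : Re (Cminus a b) = Re a - Re b.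
Proof. destruct a, b; simpl; ring. Qed.
Lemma P_im_minus (a b : C) : Im (Cminus a b) = Im a - Im b.
Proof. destruct a, b; simpl; ring. Qed.
Lemma P_re_div (a : C) r : r <> 0 -> Re (Cdiv a (RtoC r)) = Re a / r.
Proof. intro. destruct a; unfold Cdiv, Cinv, Cmult; simpl. field. auto. Qed.
Lemma P_im_div (a : C) r : r <> 0 -> Im (Cdiv a (RtoC r)) = Im a / r.
Proof. intro. destruct a; unfold Cdiv, Cinv, Cmult; simpl. field. auto. Qed.

Lemma radial_lip (f fd : C -> C) z0 t s C0 : Cmod z0 = 1 -> 0 < t < s -> s < 1 ->
  (forall c, t <= c <= s -> disc_derivative f (Cmult (RtoC c) z0) (fd (Cmult (RtoC c) z0))) ->
  (forall c, t <= c <= s -> Cmod (fd (Cmult (RtoC c) z0)) <= C0) ->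
  Cmod (Cminus (f (Cmult (RtoC s) z0)) (f (Cmult (RtoC t) z0))) <= 2 * C0 * (s - t).
Proof.
  intros Hz0 Ht Hs Hd Hb.
  destruct (MVT_cor2 (fun x => Re (f (Cmult (RtoC x) z0))) (fun x => Re (Cmult z0 (fd (Cmult (RtoC x) z0)))) t s)
    as [c1 [E1 Hc1]]. lra.
  { intros c Hc. apply (radial_deriv_part Re f z0 c _ P_re_minus P_re_div Cmod_re_le Hz0).
    lra. apply Hd; lra. }
  destruct (MVT_cor2 (fun x => Im (f (Cmult (RtoC x) z0))) (fun x => Im (Cmult z0 (fd (Cmult (RtoC x) z0)))) t s)
    as [c2 [E2 Hc2]]. lra.
  { intros c Hc. apply (radial_deriv_part Im f z0 c _ P_im_minus P_im_div Cmod_im_le Hz0).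
    lra. apply Hd; lra. }
  eapply Rle_trans. apply Cmod_le_sum. rewrite P_re_minus, P_im_minus, E1, E2.
  rewrite !Rabs_mult, (Rabs_pos_eq (s - t)) by lra.
  assert (Rabs (Re (Cmult z0 (fd (Cmult (RtoC c1) z0)))) <= C0).
  { eapply Rle_trans. apply Cmod_re_le. rewrite Cmod_mult, Hz0, Rmult_1_l. apply Hb. lra. }
  assert (Rabs (Im (Cmult z0 (fd (Cmult (RtoC c2) z0)))) <= C0).
  { eapply Rle_trans. apply Cmod_im_le. rewrite Cmod_mult, Hz0, Rmult_1_l. apply Hb. lra. }
  nra.
Qed.

Local Open Scope R_scope.

Section Fwd.
Context {H : Type} (HS : HilbertSpace H).

Local Notation "x +v y" := (hadd HS x y) (at level 50, left associativity).
Local Notation "a *v x" := (hscal HS a x) (at level 40, no associativity).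
Local Notation "[< x , y >]" := (hinner HS x y).
Local Notation "0v" := (hzero HS).
Local Notation "-v x" := (hopp HS x) (at level 35).
Local Notation "x -v y" := (hsub HS x y) (at level 50, left associativity).
Local Notation nm := (hnorm HS).

Context (U : H -> H) (HU : unitary HS U) (psi : H) (Hpsi : nsq HS psi = 1)
        (z0 : C) (Hz0 : Cmod z0 = 1).

Local Notation Rz := (Res HS U HU).
Local Notation Uin := (Ui HS U HU).
Local Notation Aq := (Af HS U HU psi).
Local Notation Wq := (Wf HS U HU psi).
Local Notation Adq := (Adf HS U HU psi).

Definition uu z := Cminus (RtoC 1) (Cmult z (Cconj z0)).

Lemma uu_nz z : Cmod z < 1 -> uu z <> RtoC 0.
Proof. intro. apply one_minus_unit_nz; auto. Qed.

Lemma uu_mod z : Cmod (uu z) = Cmod (Cminus z z0).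
Proof. apply one_minus_unit; auto. Qed.

Section PQ.
Context (p q : H) (Hp : clos HS U z0 p) (Hq : U q = z0 *v q) (qnz : q <> 0v)
        (Hdec : psi = p +v q).

Lemma pq0 : [< p, q >] = RtoC 0.
Proof. apply (clos_orth HS (ranU HS U z0)); auto. apply eig_orth; auto. Qed.

Lemma qp0 : [< q, p >] = RtoC 0.
Proof. rewrite hinner_conj, pq0. apply injective_projections; simpl; ring. Qed.

Lemma R_q z : Cmod z < 1 -> Rz z q = Cinv (uu z) *v q.
Proof.
  intro Hz. pose proof (uu_nz z Hz) as unz. symmetry. apply R_uniq; auto.
  rewrite (Ui_scal HS U HU), (Ui_eig HS U HU z0 Hz0 q Hq).
  apply (ext_inner HS); intro; unfold hsub;
    repeat rewrite ?hinner_add_l, ?hinner_scal_l, ?inner_opp_l, ?inner_0_l.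
  unfold uu in *. field. auto.
Qed.

Lemma R_perp z v : Cmod z < 1 -> [< v, q >] = RtoC 0 -> [< Rz z v, q >] = RtoC 0.
Proof.
  intros Hz Hv. pose proof (R_spec HS U HU z v Hz) as F.
  rewrite <- F in Hv. rewrite inner_sub_l, hinner_scal_l, Ui_adj, Hq, inner_scal_r in Hv.
  assert (E : Cmult (uu z) [< Rz z v, q >] = RtoC 0) by (rewrite <- Hv; unfold uu; ring).
  pose proof (uu_nz z Hz) as unz.
  transitivity (Cmult (Cinv (uu z)) (Cmult (uu z) [< Rz z v, q >])). field; auto.
  rewrite E. ring.
Qed.

Lemma Ui_perp v : [< v, q >] = RtoC 0 -> [< Uin v, q >] = RtoC 0.
Proof.
  intro Hv. rewrite Ui_adj, Hq, inner_scal_r, Hv. ring.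
Qed.

Definition Bq z := [< Rz z p, p >].
Definition B2q z := [< Rz z (Uin (Rz z p)), p >].

Lemma A_dec z : Cmod z < 1 -> Cmult (Aq z) (uu z) = Cplus (RtoC (nsq HS q)) (Cmult (uu z) (Bq z)).
Proof.
  intro Hz. pose proof (uu_nz z Hz). unfold Af, Bq. rewrite Hdec at 1 2.
  rewrite R_add, hinner_add_l, !inner_add_r, R_q by auto.
  rewrite (R_perp z p Hz pq0), !hinner_scal_l, qp0, inner_self.
  field. auto.
Qed.

Lemma Ad_dec z : Cmod z < 1 -> Cmult (Cmult (Adq z) (uu z)) (uu z) =
    Cplus (Cmult (Cconj z0) (RtoC (nsq HS q))) (Cmult (Cmult (uu z) (uu z)) (B2q z)).
Proof.
  intro Hz. pose proof (uu_nz z Hz). unfold Adf, B2q. rewrite Hdec at 1 2.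
  rewrite R_add, R_q by auto.
  rewrite (Ui_add HS U HU), (Ui_scal HS U HU), (Ui_eig HS U HU z0 Hz0 q Hq).
  rewrite R_add, !R_scal, R_q by auto.
  rewrite hinner_add_l, !inner_add_r, !hinner_scal_l.
  rewrite (R_perp z _ Hz (Ui_perp _ (R_perp z p Hz pq0))), qp0, inner_self.
  field. auto.
Qed.

Lemma nsq_q_pos : 0 < nsq HS q.
Proof.
  destruct (nsq_nonneg HS q); auto. exfalso. apply qnz. apply nsq_0. auto.
Qed.

Lemma fwd_limits : nt_limit Wq z0 (RtoC 1) /\
  nt_limit (fun z => Cdiv (Adq z) (Cmult (Aq z) (Aq z))) z0 (Cdiv (Cconj z0) (RtoC (nsq HS q))).
Proof.
  set (n := nsq HS q). pose proof nsq_q_pos as np. fold n in np.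
  assert (Key : forall M, 1 < M -> forall eps, 0 < eps -> exists del, 0 < del /\
    forall z, Cmod z < 1 -> Cmod (Cminus z z0) < M * (1 - Cmod z) ->
      Cmod (Cminus z z0) < del ->
      Cmod (Cminus (Wq z) (RtoC 1)) < eps /\
      Cmod (Cminus (Cdiv (Adq z) (Cmult (Aq z) (Aq z))) (Cdiv (Cconj z0) (RtoC n))) < eps).
  { intros M HM eps ep.
    set (P := M * M * (nm p + 1)).
    assert (MM : 1 <= M * M) by nra.
    assert (Pp : 1 <= P).
    { unfold P; pose proof (hnorm_nonneg HS p).
      replace 1 with (1 * 1) by ring. apply Rmult_le_compat; lra. }
    set (eta0 := Rmin (n / (2 * P)) (eps * (n * n) / (32 * P))).
    assert (eta0p : 0 < eta0).
    { apply Rmin_pos; apply Rdiv_lt_0_compat; try lra; apply Rmult_lt_0_compat; nra. }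
    destruct (E1_est HS U HU z0 Hz0 p Hp eta0 eta0p) as [d1 [d1p Hd1]].
    exists (Rmin d1 (eps * n / 2)). split.
    { apply Rmin_pos; nra. }
    intros z Hz Hst Hd.
    assert (Hda : Cmod (Cminus z z0) < d1) by (eapply Rlt_le_trans; [apply Hd|apply Rmin_l]).
    assert (Hdb : Cmod (Cminus z z0) < eps * n / 2) by (eapply Rlt_le_trans; [apply Hd|apply Rmin_r]).
    specialize (Hd1 z Hz Hda).
    set (r := 1 - Cmod z) in *. assert (rp : 0 < r) by (unfold r; lra).
    set (eta := r * nm (Rz z p)) in *.
    assert (etan : 0 <= eta) by (unfold eta; pose proof (hnorm_nonneg HS (Rz z p)); nra).
    pose proof (uu_nz z Hz) as unz. rewrite <- uu_mod in Hst, Hdb.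
    set (u := uu z) in *.
    set (e1 := Cmult u (Bq z)). set (e2 := Cmult (Cmult u u) (B2q z)).
    assert (He1 : Cmod e1 <= P * eta).
    { unfold e1. rewrite Cmod_mult.
      assert (Cmod (Bq z) <= nm (Rz z p) * nm p) by apply CS.
      pose proof (Cmod_ge_0 u). pose proof (Cmod_ge_0 (Bq z)). pose proof (hnorm_nonneg HS p).
      pose proof (hnorm_nonneg HS (Rz z p)).
      apply Rle_trans with (M * r * (nm (Rz z p) * nm p)).
      apply Rmult_le_compat; lra.
      unfold P, eta. 
      assert (EE : M * r * (nm (Rz z p) * nm p) = M * (r * nm (Rz z p)) * nm p) by ring.
      rewrite EE. fold eta.
      apply Rle_trans with (M * eta * (nm p + 1)). apply Rmult_le_compat_l; nra.
      assert (0 <= eta * (nm p + 1)) by nra.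
      replace (M * M * (nm p + 1) * eta) with (M * M * (eta * (nm p + 1))) by ring.
      replace (M * eta * (nm p + 1)) with (M * (eta * (nm p + 1))) by ring.
      apply Rmult_le_compat_r; nra. }
    assert (He2 : Cmod e2 <= P * eta).
    { unfold e2. rewrite !Cmod_mult.
      assert (Cmod (B2q z) <= nm (Rz z p) / r * nm p).
      { eapply Rle_trans. apply CS. apply Rmult_le_compat_r. apply hnorm_nonneg.
        eapply Rle_trans. apply (R_bound' HS U HU); auto. rewrite (Ui_norm HS U HU). right; auto. }
      pose proof (Cmod_ge_0 u). pose proof (Cmod_ge_0 (B2q z)). pose proof (hnorm_nonneg HS p).
      pose proof (hnorm_nonneg HS (Rz z p)).
      apply Rle_trans with (M * r * (M * r) * (nm (Rz z p) / r * nm p)).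
      { apply Rmult_le_compat; try nra. all: try (apply Rmult_le_compat; nra). }
      replace (M * r * (M * r) * (nm (Rz z p) / r * nm p)) with (M * M * eta * nm p)
        by (unfold eta; field; lra).
      unfold P. assert (0 <= M * M * eta) by nra. nra. }
    assert (Pe1 : P * eta <= n / 2).
    { apply Rle_trans with (P * (n / (2 * P))).
      apply Rmult_le_compat_l; [lra|]. eapply Rle_trans; [left; apply Hd1|apply Rmin_l].
      right. field. lra. }
    assert (Pe2 : P * eta <= eps * (n * n) / 32).
    { apply Rle_trans with (P * (eps * (n * n) / (32 * P))).
      apply Rmult_le_compat_l; [lra|]. eapply Rle_trans; [left; apply Hd1|apply Rmin_r].
      right. field. lra. }
    set (m := Cplus (RtoC n) e1).
    assert (Hm : n / 2 <= Cmod m).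
    { unfold m. pose proof (Cmod_rev_tri (RtoC n) (Copp e1)).
      replace (Cminus (RtoC n) (Copp e1)) with (Cplus (RtoC n) e1) in H0 by ring.
      rewrite Cmod_opp, Cmod_RtoC in H0 by lra. lra. }
    assert (mnz : m <> RtoC 0) by (apply Cmod_pos_neq; lra).
    assert (EA : Aq z = Cdiv m u).
    { pose proof (A_dec z Hz). fold u in H0. fold n in H0. fold e1 in H0. fold m in H0.
      rewrite <- H0. field. auto. }
    assert (EAd : Adq z = Cdiv (Cplus (Cmult (Cconj z0) (RtoC n)) e2) (Cmult u u)).
    { pose proof (Ad_dec z Hz). fold u in H0. fold n in H0. fold e2 in H0.
      rewrite <- H0. field. auto. }
    split.
    - unfold Wf. rewrite EA.
      replace (Cminus (Cminus (RtoC 1) (Cinv (Cdiv m u))) (RtoC 1)) with (Copp (Cdiv u m))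
        by (field; auto).
      rewrite Cmod_opp, Cmod_div by auto.
      apply Rle_lt_trans with (Cmod u / (n / 2)).
      { unfold Rdiv. apply Rmult_le_compat_l. apply Cmod_ge_0.
        apply Rinv_le_contravar; lra. }
      apply Rmult_lt_reg_r with (n / 2). lra.
      replace (Cmod u / (n / 2) * (n / 2)) with (Cmod u) by (field; lra). lra.
    - rewrite EA, EAd.
      assert (nC : RtoC n <> RtoC 0) by (intro E; injection E; lra).
      replace (Cminus (Cdiv (Cdiv (Cplus (Cmult (Cconj z0) (RtoC n)) e2) (Cmult u u))
                (Cmult (Cdiv m u) (Cdiv m u))) (Cdiv (Cconj z0) (RtoC n)))
        with (Cdiv (Cminus (Cmult (RtoC n) e2) (Cmult (Cconj z0) (Cplus (Cmult (RtoC (2 * n)) e1) (Cmult e1 e1))))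
                   (Cmult (RtoC n) (Cmult m m))).
      2: { unfold m. rewrite RtoC_mult. field. repeat split; auto. }
      rewrite Cmod_div. 2: { apply Cmult_neq_0; auto. apply Cmult_neq_0; auto. }
      rewrite !Cmod_mult, Cmod_RtoC by lra.
      assert (Num : Cmod (Cminus (Cmult (RtoC n) e2)
                 (Cmult (Cconj z0) (Cplus (Cmult (RtoC (2 * n)) e1) (Cmult e1 e1)))) <= 4 * n * (P * eta)).
      { eapply Rle_trans. apply Cmod_tri_minus. rewrite !Cmod_mult, Cmod_conj, Hz0, Cmod_RtoC by lra.
        eapply Rle_trans. apply Rplus_le_compat_l. rewrite Rmult_1_l. apply Cmod_triangle.
        rewrite !Cmod_mult, Cmod_RtoC by lra.
        pose proof (Cmod_ge_0 e1). pose proof (Cmod_ge_0 e2).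
        assert (Cmod e1 * Cmod e1 <= Cmod e1 * (n / 2)) by (apply Rmult_le_compat_l; lra).
        nra. }
      apply Rle_lt_trans with (4 * n * (P * eta) / (n * (n / 2 * (n / 2)))).
      { assert (0 < Cmod m) by lra.
        assert (0 < n * (Cmod m * Cmod m)) by (apply Rmult_lt_0_compat; [lra|nra]).
        unfold Rdiv. apply Rmult_le_compat; auto. apply Cmod_ge_0.
        left; apply Rinv_0_lt_compat; auto.
        apply Rinv_le_contravar. apply Rmult_lt_0_compat; nra. apply Rmult_le_compat_l. lra.
        apply Rmult_le_compat; lra. }
      replace (4 * n * (P * eta) / (n * (n / 2 * (n / 2)))) with (16 * (P * eta) / (n * n))
        by (field; lra).
      apply Rle_lt_trans with (16 * (eps * (n * n) / 32) / (n * n)).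
      { unfold Rdiv. apply Rmult_le_compat_r. left; apply Rinv_0_lt_compat; nra. lra. }
      replace (16 * (eps * (n * n) / 32) / (n * n)) with (eps / 2) by (field; lra). lra. }
  split.
  - intros M HM eps ep. destruct (Key M HM eps ep) as [d [dp Hd]]. exists d. split; auto.
    intros z Hz Hst Hdl. apply Hd; auto.
  - intros M HM eps ep. destruct (Key M HM eps ep) as [d [dp Hd]]. exists d. split; auto.
    intros z Hz Hst Hdl. apply Hd; auto.
Qed.

End PQ.

Lemma fwd_ang p q : clos HS U z0 p -> U q = z0 *v q -> q <> 0v -> psi = p +v q ->
  has_angular_derivative Wq z0.
Proof.
  intros Hp Hq qnz Hdec.
  destruct (fwd_limits p q Hp Hq qnz Hdec) as [L1 L2].
  split.
  - exists (RtoC 1). split; auto. apply Cmod_1.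
  - exists (fun z => Cdiv (Adq z) (Cmult (Aq z) (Aq z))). split.
    + intros z Hz. apply W_deriv; auto.
    + eexists. apply L2.
Qed.

End Fwd.

Local Open Scope R_scope.

Lemma le_eps a b : (forall eps, 0 < eps -> a < b + eps) -> a <= b.
Proof.
  intro Hx. apply Rnot_lt_le. intro Hl. specialize (Hx ((a - b)/2)). lra.
Qed.

Section Bwd.
Context {H : Type} (HS : HilbertSpace H).

Local Notation "x +v y" := (hadd HS x y) (at level 50, left associativity).
Local Notation "a *v x" := (hscal HS a x) (at level 40, no associativity).
Local Notation "[< x , y >]" := (hinner HS x y).
Local Notation "0v" := (hzero HS).
Local Notation "x -v y" := (hsub HS x y) (at level 50, left associativity).
Local Notation nm := (hnorm HS).

Context (U : H -> H) (HU : unitary HS U) (psi : H) (Hpsi : nsq HS psi = 1)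
        (z0 : C) (Hz0 : Cmod z0 = 1).

Local Notation Rz := (Res HS U HU).
Local Notation Aq := (Af HS U HU psi).
Local Notation Wq := (Wf HS U HU psi).

Lemma rz_mod t : 0 <= t -> Cmod (Cmult (RtoC t) z0) = t.
Proof. intro. rewrite Cmod_rz by auto. apply Rabs_pos_eq; auto. Qed.

Lemma rz_dist t : t <= 1 -> Cmod (Cminus (Cmult (RtoC t) z0) z0) = 1 - t.
Proof.
  intro. replace (Cminus (Cmult (RtoC t) z0) z0) with (Cmult (RtoC (t - 1)) z0).
  rewrite Cmod_rz by auto. rewrite Rabs_left1; lra.
  rewrite RtoC_minus. ring.
Qed.

Lemma bwd_eig : nt_limit Wq z0 (RtoC 1) ->
  (exists b' : C -> C, (forall z, Cmod z < 1 -> disc_derivative Wq z (b' z)) /\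
     exists L', nt_limit b' z0 L') ->
  exists h, h <> 0v /\ U h = z0 *v h.
Proof.
  intros HW [b' [Hb' [L' HL']]].
  apply NNPP. intro Hn.
  assert (Hno : forall h, U h = z0 *v h -> h = 0v).
  { intros h Hh. apply NNPP. intro hnz. apply Hn. exists h. auto. }
  assert (Cpsi : clos HS U z0 psi).
  { destruct (decomp_v HS U HU z0 Hz0 psi) as [p [q [Cp [Hq Hd]]]].
    rewrite (Hno q Hq), hadd_zero in Hd. rewrite Hd. auto. }
  set (C0 := Cmod L' + 1).
  assert (C0p : 1 <= C0) by (unfold C0; pose proof (Cmod_ge_0 L'); lra).
  destruct (HL' 2 ltac:(lra) 1 ltac:(lra)) as [db [dbp Hdb]].
  set (r1 := Rmax (1/2) (1 - db / 2)).
  assert (r1a : 1/2 <= r1) by apply Rmax_l.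
  assert (r1b : 1 - db / 2 <= r1) by apply Rmax_r.
  assert (r1c : r1 < 1) by (unfold r1; apply Rmax_lub_lt; lra).
  assert (Bd : forall c, r1 <= c < 1 -> Cmod (b' (Cmult (RtoC c) z0)) <= C0).
  { intros c Hc.
    assert (Cmod (Cminus (b' (Cmult (RtoC c) z0)) L') < 1).
    { apply Hdb. rewrite rz_mod; lra. rewrite rz_dist, rz_mod; lra. rewrite rz_dist; lra. }
    pose proof (Cmod_triangle (Cminus (b' (Cmult (RtoC c) z0)) L') L').
    replace (Cplus (Cminus (b' (Cmult (RtoC c) z0)) L') L') with (b' (Cmult (RtoC c) z0)) in H1 by ring.
    unfold C0. lra. }
  assert (Lip : forall t s, r1 <= t -> t < s -> s < 1 ->
     Cmod (Cminus (Wq (Cmult (RtoC s) z0)) (Wq (Cmult (RtoC t) z0))) <= 2 * C0 * (s - t)).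
  { intros t s Ht Hts Hs. apply (radial_lip Wq b' z0 t s C0 Hz0); try lra.
    - intros c Hc. apply Hb'. rewrite rz_mod; lra.
    - intros c Hc. apply Bd. lra. }
  assert (Rad : forall t, r1 <= t < 1 -> Cmod (Cminus (Wq (Cmult (RtoC t) z0)) (RtoC 1)) <= 2 * C0 * (1 - t)).
  { intros t Ht. apply le_eps. intros eps ep.
    destruct (HW 2 ltac:(lra) eps ep) as [dw [dwp Hdw]].
    set (s := (Rmax t (1 - dw / 2) + 1) / 2).
    assert (sa : t <= Rmax t (1 - dw/2)) by apply Rmax_l.
    assert (sb : 1 - dw/2 <= Rmax t (1 - dw/2)) by apply Rmax_r.
    assert (sc : Rmax t (1 - dw/2) < 1) by (apply Rmax_lub_lt; lra).
    assert (Ws : Cmod (Cminus (Wq (Cmult (RtoC s) z0)) (RtoC 1)) < eps).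
    { apply Hdw. rewrite rz_mod; unfold s; lra. rewrite rz_dist, rz_mod; unfold s; lra.
      rewrite rz_dist; unfold s; lra. }
    pose proof (Lip t s ltac:(lra) ltac:(unfold s; lra) ltac:(unfold s; lra)).
    pose proof (Cmod_tri3 (Wq (Cmult (RtoC t) z0)) (Wq (Cmult (RtoC s) z0)) (RtoC 1)).
    rewrite Cmod_minus_sym in H0.
    assert (2 * C0 * (s - t) <= 2 * C0 * (1 - t)) by (apply Rmult_le_compat_l; unfold s; lra).
    lra. }
  destruct (E1_est HS U HU z0 Hz0 psi Cpsi (1 / (4 * C0)) ltac:(apply Rdiv_lt_0_compat; lra))
    as [de [dep Hde]].
  set (t := Rmax r1 (1 - de / 2)).
  assert (ta : r1 <= t) by apply Rmax_l.
  assert (tb : 1 - de/2 <= t) by apply Rmax_r.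
  assert (tc : t < 1) by (apply Rmax_lub_lt; lra).
  set (z := Cmult (RtoC t) z0).
  assert (Hz : Cmod z < 1) by (unfold z; rewrite rz_mod; lra).
  specialize (Hde z Hz ltac:(unfold z; rewrite rz_dist; lra)).
  specialize (Rad t ltac:(lra)). fold z in Rad.
  unfold z in Hde. rewrite rz_mod in Hde by lra. fold z in Hde.
  rewrite <- Cmod_opp in Rad.
  replace (Copp (Cminus (Wq z) (RtoC 1))) with (Cminus (RtoC 1) (Wq z)) in Rad by ring.
  rewrite one_minus_W in Rad by auto.
  rewrite Cmod_inv in Rad by (apply A_nz; auto).
  pose proof (A_bound HS U HU psi Hpsi z Hz).
  pose proof (A_mod_ge HS U HU psi Hpsi z Hz).
  set (nr := nm (Rz z psi)) in *. set (a := Cmod (Aq z)) in *.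
  assert (/ nr <= / a) by (apply Rinv_le_contravar; lra).
  assert (1 <= 2 * C0 * (1 - t) * nr).
  { assert (0 < nr) by lra.
    apply Rmult_le_reg_r with (/ nr). apply Rinv_0_lt_compat; auto.
    rewrite Rmult_1_l, Rmult_assoc, Rinv_r, Rmult_1_r by lra. lra. }
  assert (HH : 2 * C0 * ((1 - t) * nr) < 2 * C0 * (1 / (4 * C0))) by (apply Rmult_lt_compat_l; lra).
  replace (2 * C0 * (1 / (4 * C0))) with (1/2) in HH by (field; lra).
  lra.
Qed.

End Bwd.

Local Open Scope R_scope.

Lemma nt_limit_ext f g gam L : (forall z, Cmod z < 1 -> f z = g z) ->
  nt_limit f gam L -> nt_limit g gam L.
Proof.
  intros E Hf M HM eps ep. destruct (Hf M HM eps ep) as [d [dp Hd]].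
  exists d. split; auto. intros z Hz H1 H2. rewrite <- E by auto. auto.
Qed.

Lemma nt_limit_scale f c gam L : Cmod c = 1 ->
  nt_limit f gam L -> nt_limit (fun z => Cmult c (f z)) gam (Cmult c L).
Proof.
  intros Hc Hf M HM eps ep. destruct (Hf M HM eps ep) as [d [dp Hd]].
  exists d. split; auto. intros z Hz H1 H2.
  replace (Cminus (Cmult c (f z)) (Cmult c L)) with (Cmult c (Cminus (f z) L)) by ring.
  rewrite Cmod_mult, Hc, Rmult_1_l. auto.
Qed.

Lemma dd_ext f g z d : Cmod z < 1 -> (forall z, Cmod z < 1 -> f z = g z) ->
  disc_derivative f z d -> disc_derivative g z d.
Proof.
  intros Hz E Hf eps ep. destruct (Hf eps ep) as [del [dp Hd]].
  exists del. split; auto. intros w Hw Hne Hl. rewrite <- !E by auto. auto.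
Qed.

Lemma dd_scale f c z d : Cmod c = 1 ->
  disc_derivative f z d -> disc_derivative (fun z => Cmult c (f z)) z (Cmult c d).
Proof.
  intros Hc Hf eps ep. destruct (Hf eps ep) as [del [dp Hd]].
  exists del. split; auto. intros w Hw Hne Hl.
  assert (wz : Cminus w z <> RtoC 0).
  { intro E. apply Hne. apply Ceq_minus. auto. }
  replace (Cminus (Cdiv (Cminus (Cmult c (f w)) (Cmult c (f z))) (Cminus w z)) (Cmult c d))
    with (Cmult c (Cminus (Cdiv (Cminus (f w) (f z)) (Cminus w z)) d)) by (field; auto).
  rewrite Cmod_mult, Hc, Rmult_1_l. auto.
Qed.

Lemma angder_ext f g gam : (forall z, Cmod z < 1 -> f z = g z) ->
  has_angular_derivative f gam -> has_angular_derivative g gam.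
Proof.
  intros E [[L [HL HLm]] [b' [Hb' [L' HL']]]]. split.
  - exists L. split; auto. apply (nt_limit_ext f); auto.
  - exists b'. split. intros z Hz. apply (dd_ext f); auto. exists L'. auto.
Qed.

Lemma angder_scale f c gam : Cmod c = 1 ->
  has_angular_derivative f gam -> has_angular_derivative (fun z => Cmult c (f z)) gam.
Proof.
  intros Hc [[L [HL HLm]] [b' [Hb' [L' HL']]]]. split.
  - exists (Cmult c L). split. apply nt_limit_scale; auto. rewrite Cmod_mult, Hc, HLm. ring.
  - exists (fun z => Cmult c (b' z)). split. intros z Hz. apply dd_scale; auto.
    exists (Cmult c L'). apply nt_limit_scale; auto.
Qed.

Local Open Scope R_scope.

Section Main.
Context {H : Type} (HS : HilbertSpace H).

Local Notation "x +v y" := (hadd HS x y) (at level 50, left associativity).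
Local Notation "a *v x" := (hscal HS a x) (at level 40, no associativity).
Local Notation "[< x , y >]" := (hinner HS x y).
Local Notation "0v" := (hzero HS).
Local Notation "-v x" := (hopp HS x) (at level 35).
Local Notation "x -v y" := (hsub HS x y) (at level 50, left associativity).
Local Notation nm := (hnorm HS).

Ltac vec10 := apply (ext_inner HS); intro; unfold hsub;
  repeat rewrite ?hinner_add_l, ?hinner_scal_l, ?inner_opp_l, ?inner_0_l; ring.

Lemma one_dim_mult (S : H -> Prop) e0 v : dim_one HS S -> S e0 -> nsq HS e0 = 1 -> S v ->
  v = [< v, e0 >] *v e0.
Proof.
  intros [e [enz He]] S0 N0 Sv.
  destruct (proj1 (He e0) S0) as [c0 E0]. destruct (proj1 (He v) Sv) as [c Ev].
  assert (c0nz : c0 <> RtoC 0).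
  { intro Ec. subst c0. rewrite E0, scal_0_l, nsq_zero in N0. lra. }
  assert (Ev' : v = Cdiv c c0 *v e0).
  { rewrite E0, Ev, hscal_assoc. f_equal. field. auto. }
  rewrite Ev' at 2. rewrite hinner_scal_l, inner_self, N0, Cmult_1_r. auto.
Qed.

Lemma pyth a b : Re [< a, b >] = 0 -> nsq HS (a +v b) = nsq HS a + nsq HS b.
Proof. intro E. rewrite nsq_add, E. ring. Qed.

Context (dom : H -> Prop) (V : H -> H) (Hiso : isometric_lt HS dom V)
        (U0 : H -> H) (HU0 : unitary HS U0) (Hext0 : forall x, dom x -> U0 x = V x)
        (psi : H) (Hpsi : nsq HS psi = 1) (Hpo : orth HS dom psi)
        (Hdd : dim_one HS (orth HS dom)) (Hdr : dim_one HS (orth HS (ran dom V)))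
        (Hsimp : simple_isometry HS dom V).

Definition phi := U0 psi.

Lemma nsq_phi : nsq HS phi = 1.
Proof. unfold phi. rewrite (U_nsq HS U0 HU0). auto. Qed.

Lemma phi_orth : orth HS (ran dom V) phi.
Proof.
  intros y [x [Dx ->]]. rewrite <- Hext0 by auto. unfold phi.
  rewrite (U_inner HS U0 HU0). apply Hpo. auto.
Qed.

Lemma dom_mult v : orth HS dom v -> v = [< v, psi >] *v psi.
Proof. intro. apply (one_dim_mult (orth HS dom)); auto. Qed.

Lemma ran_mult v : orth HS (ran dom V) v -> v = [< v, phi >] *v phi.
Proof. intro. apply (one_dim_mult (orth HS (ran dom V))); auto. apply phi_orth. apply nsq_phi. Qed.

Lemma dom_char y : [< y, psi >] = RtoC 0 -> dom y.
Proof.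
  intro Hy. destruct (projection HS dom (proj1 Hiso) y) as [p [Dp Op]].
  pose proof (dom_mult _ Op) as E.
  rewrite inner_sub_l, Hy, (Hpo p Dp) in E.
  replace (Cminus (RtoC 0) (RtoC 0)) with (RtoC 0) in E by ring.
  rewrite scal_0_l in E. apply (hsub_eq0 HS) in E. subst; auto.
Qed.

Definition Ua (al : C) (x : H) : H := U0 x +v Cmult (Cminus al (RtoC 1)) [< x, psi >] *v phi.

Lemma Ua_alt al x : Ua al x = U0 (x +v Cmult (Cminus al (RtoC 1)) [< x, psi >] *v psi).
Proof. unfold Ua, phi. rewrite (U_add HS U0 HU0), (U_scal HS U0 HU0). auto. Qed.

Lemma Ua_ext al : Cmod al = 1 -> unitary_extension HS dom V (Ua al).
Proof.
  intro Ha. split; [split; [|split; [|split]]|].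
  - intros x y. unfold Ua. rewrite (U_add HS U0 HU0), hinner_add_l. vec10.
  - intros a x. unfold Ua. rewrite (U_scal HS U0 HU0), hinner_scal_l. vec10.
  - intros x. rewrite Ua_alt, (U_norm HS U0 HU0). rewrite !hnorm_nsq. f_equal.
    rewrite nsq_add, nsq_scal, Hpsi, inner_scal_r.
    pose proof (Cmod2_alt al) as Ea. rewrite Ha in Ea.
    rewrite Cmod2_alt. destruct al as [a1 a2]. destruct ([< x, psi >]) as [c1 c2].
    simpl in *. 
    match goal with |- ?L = _ =>
      assert (EX : L = nsq HS x + (c1*c1+c2*c2)*((a1*a1+a2*a2) - 1)) by ring end.
    rewrite EX. assert (a1*a1+a2*a2 = 1) by nra. rewrite H0. ring.
  - intro y. exists (Ui HS U0 HU0 y +v Cmult (Cminus (Cconj al) (RtoC 1)) [< Ui HS U0 HU0 y, psi >] *v psi).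
    rewrite Ua_alt. rewrite hinner_add_l, hinner_scal_l, inner_self, Hpsi.
    set (v := Ui HS U0 HU0 y). set (c := [< v, psi >]).
    replace (v +v Cmult (Cminus (Cconj al) (RtoC 1)) c *v psi +v
      Cmult (Cminus al (RtoC 1)) (Cplus c (Cmult (Cmult (Cminus (Cconj al) (RtoC 1)) c) (RtoC 1))) *v psi)
      with v.
    apply (U_Ui HS U0 HU0).
    apply (ext_inner HS); intro w; unfold hsub;
      repeat rewrite ?hinner_add_l, ?hinner_scal_l, ?inner_opp_l, ?inner_0_l.
    assert (Cmult al (Cconj al) = RtoC 1) by (apply unit_conj_r; auto).
    transitivity (Cplus [< v, w >] (Cmult (Cmult c (Cminus (Cmult al (Cconj al)) (RtoC 1))) [< psi, w >])).
    rewrite H0. ring. ring.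
  - intros x Dx. unfold Ua. rewrite (Hpo x Dx), Cmult_0_r, scal_0_l, hadd_zero. auto.
Qed.

Lemma ext_form U' : unitary_extension HS dom V U' ->
  exists al, Cmod al = 1 /\ forall x, U' x = Ua al x.
Proof.
  intros [HU' Hext].
  assert (Orth : orth HS (ran dom V) (U' psi)).
  { intros y [x [Dx ->]]. rewrite <- Hext by auto. rewrite (U_inner HS U' HU'). apply Hpo; auto. }
  set (al := [< U' psi, phi >]).
  assert (Eal : U' psi = al *v phi) by (apply ran_mult; auto).
  exists al. split.
  { pose proof (U_nsq HS U' HU' psi) as N. rewrite Eal, nsq_scal, nsq_phi, Hpsi in N.
    pose proof (Cmod_ge_0 al). nra. }
  intro x. set (c := [< x, psi >]). set (d := x -v c *v psi).
  assert (Dd : dom d).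
  { apply dom_char. unfold d. rewrite inner_sub_l, hinner_scal_l, inner_self, Hpsi. unfold c. ring. }
  assert (Ex : x = d +v c *v psi) by (unfold d; vec10).
  unfold Ua. fold c. rewrite Ex at 1 2.
  rewrite (U_add HS U' HU'), (U_scal HS U' HU'), (U_add HS U0 HU0), (U_scal HS U0 HU0).
  rewrite Hext, Hext0, Eal by auto. fold phi.
  apply (ext_inner HS); intro w; unfold hsub;
    repeat rewrite ?hinner_add_l, ?hinner_scal_l, ?inner_opp_l, ?inner_0_l.
  unfold Cminus. ring.
Qed.

Lemma conj_inv al : Cmod al = 1 -> Cconj al = Cinv al.
Proof.
  intro Ha. assert (anz : al <> RtoC 0) by (apply Cmod_pos_neq; lra).
  transitivity (Cmult (Cinv al) (Cmult al (Cconj al))). field. auto.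
  rewrite unit_conj_r by auto. ring.
Qed.

Lemma den_nz al A : Cmod al = 1 -> 1/2 < Re A ->
  Cplus (RtoC 1) (Cmult (Cminus al (RtoC 1)) A) <> RtoC 0.
Proof.
  intros Ha HA E.
  pose proof (Cmod2_alt al) as Ea. rewrite Ha in Ea.
  destruct al as [a b]. destruct A as [x y]. simpl in *.
  injection E as E1 E2.
  assert (E3 : (a - 1) * (1 - 2 * x) = 0).
  { transitivity ((a - 1) * (1 + ((a + - (1)) * x - (b + - 0) * y))
       + b * (0 + ((a + - (1)) * y + (b + - 0) * x)) - (a * (a * 1) + b * (b * 1) - 1 * (1 * 1)) * x).
    ring. rewrite E1, E2, <- Ea. ring. }
  assert (a = 1) by (apply Rmult_integral in E3; destruct E3; lra).
  subst a. assert (b = 0) by nra. subst b. nra.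
Qed.

Lemma W_rel U' (HU' : unitary HS U') al : Cmod al = 1 -> (forall x, U' x = Ua al x) ->
  forall z, Cmod z < 1 -> Wf HS U' HU' psi z = Cmult (Cconj al) (Wf HS U0 HU0 psi z).
Proof.
  intros Ha HUa z Hz.
  set (k1 := Res HS U0 HU0 z psi).
  set (A1 := Af HS U0 HU0 psi z).
  assert (EA1 : A1 = [< k1, psi >]) by auto.
  assert (A1nz : A1 <> RtoC 0) by (apply A_nz; auto).
  assert (A1re : 1/2 < Re A1) by (apply A_re_gt; auto).
  assert (dnz := den_nz al A1 Ha A1re).
  set (den := Cplus (RtoC 1) (Cmult (Cminus al (RtoC 1)) A1)) in *.
  assert (anz : al <> RtoC 0) by (apply Cmod_pos_neq; lra).
  set (s := Cdiv al den).
  assert (F1 : U0 k1 = phi +v z *v k1).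
  { pose proof (R_U HS U0 HU0 z psi Hz) as F. fold k1 in F. unfold phi. rewrite <- F. vec10. }
  assert (Ek2 : s *v k1 = Res HS U' HU' z psi).
  { apply R_of_U; auto. rewrite !HUa. unfold Ua.
    rewrite (U_scal HS U0 HU0), F1, hinner_scal_l, <- EA1, inner_self, Hpsi. fold phi.
    apply (ext_inner HS); intro w; unfold hsub;
      repeat rewrite ?hinner_add_l, ?hinner_scal_l, ?inner_opp_l, ?inner_0_l.
    unfold s, den. field. auto. }
  unfold Wf. unfold Af at 1. rewrite <- Ek2, hinner_scal_l, <- EA1. fold A1.
  rewrite conj_inv by auto. unfold s, den. field. repeat split; auto.
Qed.

Lemma simple_contra U' h z0 : unitary_extension HS dom V U' -> Cmod z0 = 1 ->
  h <> 0v -> U' h = z0 *v h -> [< h, psi >] = RtoC 0 -> False.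
Proof.
  intros [HU' Hext] Hz0 hnz Hh Hhp.
  apply Hsimp.
  set (L := fun y => exists c, y = c *v h).
  assert (LD : forall x, L x -> dom x).
  { intros x [c ->]. apply dom_char. rewrite hinner_scal_l, Hhp. ring. }
  exists L. split; [|split; [|split; [|split]]].
  - split; [|split; [|split]].
    + exists (RtoC 0). rewrite scal_0_l. auto.
    + intros x y [c1 ->] [c2 ->]. exists (Cplus c1 c2). rewrite hscal_distr_r. auto.
    + intros a x [c ->]. exists (Cmult a c). rewrite hscal_assoc. auto.
    + intros u l Hu Hl.
      assert (hp : 0 < nsq HS h).
      { destruct (nsq_nonneg HS h); auto. exfalso. apply hnz, nsq_0. auto. }
      set (be := Cdiv [< l, h >] (RtoC (nsq HS h))).
      exists be.
      set (m := l -v be *v h).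
      assert (mh : [< m, h >] = RtoC 0).
      { unfold m, be. rewrite inner_sub_l, hinner_scal_l, inner_self. field.
        intro E; injection E; lra. }
      assert (m = 0v).
      { apply (small_norm_0 HS). intros eps ep.
        destruct (Hl eps ep) as [N HN]. specialize (HN N (le_n _)).
        destruct (Hu N) as [cN EN].
        assert (nsq HS m <= nsq HS (u N -v l)).
        { replace (u N -v l) with ((Cminus cN be) *v h +v -v m) by (rewrite EN; unfold m; vec10).
          rewrite pyth. rewrite nsq_opp. pose proof (nsq_nonneg HS (Cminus cN be *v h)). lra.
          rewrite inner_opp_r, hinner_scal_l, hinner_conj, mh. simpl. ring. }
        rewrite !hnorm_nsq. eapply Rle_lt_trans; [|apply HN]. rewrite hnorm_nsq.
        apply sqrt_le_1_alt. auto. }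
      unfold m in H0. apply (hsub_eq0 HS) in H0. auto.
  - exists h. split; auto. exists (RtoC 1). rewrite hscal_one. auto.
  - auto.
  - intros x Lx. pose proof (LD x Lx). destruct Lx as [c ->]. rewrite <- Hext by auto.
    rewrite (U_scal HS U' HU'), Hh, hscal_assoc. exists (Cmult c z0). auto.
  - intros y [c ->]. exists (Cmult c (Cconj z0) *v h). split. exists (Cmult c (Cconj z0)). auto.
    rewrite <- Hext. rewrite (U_scal HS U' HU'), Hh, hscal_assoc.
    f_equal. rewrite <- Cmult_assoc, unit_conj_l by auto. ring.
    apply LD. exists (Cmult c (Cconj z0)). auto.
Qed.

End Main.

Local Open Scope R_scope.

Section Fin.
Context {H : Type} (HS : HilbertSpace H).

Local Notation "x +v y" := (hadd HS x y) (at level 50, left associativity).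
Local Notation "a *v x" := (hscal HS a x) (at level 40, no associativity).
Local Notation "[< x , y >]" := (hinner HS x y).
Local Notation "0v" := (hzero HS).
Local Notation "-v x" := (hopp HS x) (at level 35).
Local Notation "x -v y" := (hsub HS x y) (at level 50, left associativity).
Local Notation nm := (hnorm HS).

Ltac vec11 := apply (ext_inner HS); intro; unfold hsub;
  repeat rewrite ?hinner_add_l, ?hinner_scal_l, ?inner_opp_l, ?inner_0_l; ring.

Context (dom : H -> Prop) (V : H -> H) (Hiso : isometric_lt HS dom V)
        (Hsimp : simple_isometry HS dom V)
        (Hdd : dim_one HS (orth HS dom)) (Hdr : dim_one HS (orth HS (ran dom V)))
        (U0 : H -> H) (HU0 : unitary HS U0) (Hext0 : forall x, dom x -> U0 x = V x)
        (psi : H) (Hpsi : nsq HS psi = 1) (Hpo : orth HS dom psi)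
        (w : C -> C) (Hw : forall z, Cmod z < 1 -> w z = Wf HS U0 HU0 psi z).

Lemma part1 z0 : Cmod z0 = 1 ->
  ((forall U, unitary_extension HS dom V U -> ~ eigenvalue HS U z0)
   <-> ~ has_angular_derivative w z0).
Proof.
  intro Hz0. split.
  - intros Hall Hang.
    destruct Hang as [[L [HL HLm]] [b' [Hb' [L' HL']]]].
    pose proof (Ua_ext HS dom V U0 HU0 Hext0 psi Hpsi Hpo L HLm) as Hext'.
    set (U' := Ua HS U0 psi L) in *.
    pose proof (proj1 Hext') as HU'.
    assert (Rel : forall z, Cmod z < 1 -> Cmult (Cconj L) (w z) = Wf HS U' HU' psi z).
    { intros z Hz. rewrite (W_rel HS U0 HU0 psi Hpsi U' HU' L HLm (fun x => eq_refl) z Hz).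
      rewrite Hw by auto. auto. }
    assert (HcL : Cmod (Cconj L) = 1) by (rewrite Cmod_conj; auto).
    destruct (bwd_eig HS U' HU' psi Hpsi z0 Hz0) as [h [hnz Hh]].
    + replace (RtoC 1) with (Cmult (Cconj L) L) by (apply unit_conj_l; auto).
      apply (nt_limit_ext (fun z => Cmult (Cconj L) (w z))); auto.
      apply nt_limit_scale; auto.
    + exists (fun z => Cmult (Cconj L) (b' z)). split.
      * intros z Hz. apply (dd_ext (fun z => Cmult (Cconj L) (w z))); auto.
        apply dd_scale; auto.
      * exists (Cmult (Cconj L) L'). apply nt_limit_scale; auto.
    + apply (Hall U' Hext'). exists h. auto.
  - intros Hnang U' Hext' [h [hnz Hh]].
    destruct (ext_form HS dom V Hiso U0 HU0 Hext0 psi Hpsi Hpo Hdd Hdr U' Hext') as [al [Ha HUa]].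
    pose proof (proj1 Hext') as HU'.
    assert (hpsi : [< h, psi >] <> RtoC 0).
    { intro E. apply (simple_contra HS dom V Hiso psi Hpsi Hpo Hdd Hsimp U' h z0 Hext' Hz0 hnz Hh E). }
    destruct (decomp_v HS U' HU' z0 Hz0 psi) as [p [q [Cp [Hq Hdec]]]].
    assert (qnz : q <> 0v).
    { intro q0. rewrite q0, hadd_zero in Hdec. subst p.
      apply hpsi. rewrite hinner_conj.
      rewrite (clos_orth HS (ranU HS U' z0) h psi); auto.
      apply injective_projections; simpl; ring.
      apply (eig_orth HS U' HU' z0 Hz0 h Hh). }
    pose proof (fwd_ang HS U' HU' psi Hpsi z0 Hz0 p q Cp Hq qnz Hdec) as Hang.
    apply Hnang.
    apply (angder_ext (fun z => Cmult al (Wf HS U' HU' psi z))).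
    + intros z Hz. rewrite (W_rel HS U0 HU0 psi Hpsi U' HU' al Ha HUa z Hz).
      rewrite Cmult_assoc, unit_conj_r by auto. rewrite Hw by auto. ring.
    + apply angder_scale; auto.
Qed.

Lemma part2 : dense HS (fun y => exists x, dom x /\ y = V x -v x) <->
  (forall U, unitary_extension HS dom V U -> ~ eigenvalue HS U (RtoC 1)).
Proof.
  destruct Hiso as [Cdom [Vadd [Vscal Vnorm]]].
  destruct Cdom as [D0 [Dadd [Dscal Dlim]]].
  split.
  - intros Hd U' [HU' Hext'] [h [hnz Hh]].
    rewrite hscal_one in Hh.
    assert (Orth : forall x, dom x -> [< V x -v x, h >] = RtoC 0).
    { intros x Dx. rewrite inner_sub_l, <- Hext' by auto.
      rewrite <- Hh at 1. rewrite (U_inner HS U' HU'). ring. }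
    assert (hp : 0 < nm h).
    { destruct (hnorm_nonneg HS h); auto. exfalso. apply hnz. apply hnorm_0_eq. auto. }
    destruct (Hd h (nm h) hp) as [y [[x [Dx ->]] Hy]].
    assert (nsq HS h <= nsq HS (h -v (V x -v x))).
    { unfold hsub at 1. rewrite pyth. rewrite nsq_opp. pose proof (nsq_nonneg HS (V x -v x)). lra.
      rewrite inner_opp_r, hinner_conj, Orth by auto. simpl. ring. }
    rewrite <- !hnorm_sq in H0.
    pose proof (hnorm_nonneg HS (h -v (V x -v x))).
    nra.
  - intros Hall h0 eps ep.
    set (T := fun y => exists x, dom x /\ y = V x -v x).
    assert (V0 : V 0v = 0v) by (rewrite <- Hext0 by auto; apply (U_zero HS U0 HU0)).
    assert (CT : closed_subspace HS (closure HS T)).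
    { apply closure_closed.
      - exists 0v. split; auto. rewrite V0, sub_self. auto.
      - intros a b [x [Dx ->]] [y [Dy ->]]. exists (x +v y). split; auto. rewrite Vadd by auto. vec11.
      - intros c a [x [Dx ->]]. exists (c *v x). split; auto. rewrite Vscal by auto. vec11. }
    destruct (projection HS _ CT h0) as [p [Cp Op]].
    set (q := h0 -v p) in *.
    assert (qT : forall x, dom x -> [< V x -v x, q >] = RtoC 0).
    { intros x Dx. apply Op. apply closure_incl. exists x. auto. }
    assert (q0 : q = 0v).
    { apply NNPP. intro qnz.
      set (Ui0 := Ui HS U0 HU0).
      set (v := Ui0 q -v q).
      assert (Ov : orth HS dom v).
      { intros x Dx. unfold v. rewrite inner_sub_r, <- (U_adj HS U0 HU0), Hext0 by auto.
        rewrite <- inner_sub_l. apply qT; auto. }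
      pose proof (dom_mult HS dom psi Hpsi Hpo Hdd v Ov) as Ev.
      set (c := [< v, psi >]) in *.
      assert (EU : U0 q = q -v c *v phi U0 psi).
      { assert (E1 : Ui0 q = q +v c *v psi) by (rewrite <- Ev; unfold v; vec11).
        assert (E2 : q = U0 q +v c *v phi U0 psi).
        { rewrite <- (U_Ui HS U0 HU0 q) at 1. fold Ui0. rewrite E1, (U_add HS U0 HU0), (U_scal HS U0 HU0). auto. }
        rewrite E2 at 2. vec11. }
      set (a := [< q, psi >]).
      assert (Nrm : Cmod c ^ 2 + 2 * Re (Cmult (Cconj c) a) = 0).
      { pose proof (Ui_norm HS U0 HU0 q) as N. fold Ui0 in N.
        assert (E1 : Ui0 q = q +v c *v psi) by (rewrite <- Ev; unfold v; vec11).
        rewrite E1 in N. rewrite !hnorm_nsq in N.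
        apply sqrt_inj in N; try apply nsq_nonneg.
        rewrite nsq_add, nsq_scal, Hpsi, inner_scal_r in N. fold a in N. lra. }
      assert (Hal : exists al, Cmod al = 1 /\ Cmult (Cminus al (RtoC 1)) a = c).
      { destruct (Ceq_dec a (RtoC 0)) as [a0|anz].
        - exists (RtoC 1). split. apply Cmod_1.
          rewrite a0, Cmult_0_r in Nrm. replace (Re (RtoC 0)) with 0 in Nrm by auto.
          assert (Cmod c = 0) by (pose proof (Cmod_ge_0 c); nra).
          apply Cmod_eq_0 in H0. rewrite H0. ring.
        - exists (Cdiv (Cplus a c) a). split.
          + rewrite Cmod_div by auto.
            assert (Cmod (Cplus a c) = Cmod a).
            { assert (Cmod (Cplus a c) ^ 2 = Cmod a ^ 2).
              { rewrite !Cmod2_alt. rewrite Cmod2_alt in Nrm.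
                destruct a as [a1 a2], c as [c1 c2]. simpl in *. nra. }
              pose proof (Cmod_ge_0 (Cplus a c)). pose proof (Cmod_ge_0 a). nra. }
            rewrite H0. apply Rdiv_diag. apply Rgt_not_eq. apply Cmod_gt_0. auto.
          + field. auto. }
      destruct Hal as [al [Ha Hc]].
      apply (Hall (Ua HS U0 psi al) (Ua_ext HS dom V U0 HU0 Hext0 psi Hpsi Hpo al Ha)).
      exists q. split; auto. rewrite hscal_one. unfold Ua. fold a. rewrite Hc, EU. vec11. }
    assert (Ch0 : closure HS T h0).
    { replace h0 with p. auto. apply (hsub_eq0 HS) in q0. auto. }
    destruct (Ch0 eps ep) as [y [Ty Hy]]. exists y. split; auto.
Qed.

End Fin.

Theorem theorem6 (H : Type) (HS : HilbertSpace H) (dom : H -> Prop) (V : H -> H)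
  (w : CC -> CC) :
  isometric_lt HS dom V ->
  simple_isometry HS dom V ->
  deficiency_1_1 HS dom V ->
  characteristic_function HS dom V w ->
  (forall z : CC, Cmod z = 1%R ->
     ((forall U, unitary_extension HS dom V U -> ~ eigenvalue HS U z)
      <-> ~ has_angular_derivative w z)) /\
  (dense HS (fun y => exists x, dom x /\ y = hsub HS (V x) x)
     <-> ~ has_angular_derivative w (RtoC 1%R)).
Proof.
  intros Hiso Hsimp [Hdd Hdr] [U0 [psi0 [[HU0 Hext0] [psi0nz [Hpo0 Hform]]]]].
  set (n0 := hnorm HS psi0).
  assert (n0p : (0 < n0)%R).
  { destruct (hnorm_nonneg HS psi0); auto. exfalso. apply psi0nz. apply (hnorm_0_eq HS). auto. }
  set (psi := hscal HS (RtoC (/ n0)) psi0).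
  assert (Hpsi : nsq HS psi = 1%R).
  { unfold psi. rewrite nsq_scal, <- (hnorm_sq HS psi0). fold n0.
    rewrite Cmod_R, Rabs_pos_eq. field. lra. left. apply Rinv_0_lt_compat. auto. }
  assert (Hpo : orth HS dom psi).
  { intros x Dx. unfold psi. rewrite inner_scal_r, Hpo0 by auto. ring. }
  assert (n0C : RtoC n0 <> RtoC 0) by (intro E; injection E; lra).
  assert (Epsi0 : psi0 = hscal HS (RtoC n0) psi).
  { unfold psi. rewrite hscal_assoc. rewrite <- RtoC_mult, Rinv_r by lra.
    rewrite hscal_one. auto. }
  assert (Cn0 : Cconj (RtoC n0) = RtoC n0) by (apply injective_projections; simpl; ring).
  assert (Hw : forall z, (Cmod z < 1)%R -> w z = Wf HS U0 HU0 psi z).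
  { intros z Hz.
    set (k := Res HS U0 HU0 z psi).
    pose proof (R_spec HS U0 HU0 z psi Hz) as F. fold k in F.
    set (y := hscal HS (RtoC n0) k).
    set (x := Ui HS U0 HU0 y).
    rewrite (Hform z Hz x y).
    - rewrite Epsi0, !inner_scal_r, Cn0. unfold x, y.
      rewrite (Ui_scal HS U0 HU0), !hinner_scal_l.
      assert (EA : Cmult z (hinner HS (Ui HS U0 HU0 k) psi) = Cminus (Af HS U0 HU0 psi z) (RtoC 1)).
      { unfold Af. fold k. pose proof (f_equal (fun v => hinner HS v psi) F) as G. simpl in G.
        rewrite inner_sub_l, hinner_scal_l, inner_self, Hpsi in G. rewrite <- G. ring. }
      assert (Anz := A_nz HS U0 HU0 psi Hpsi z Hz).
      unfold Wf, Af. unfold Af in Anz, EA. fold k. fold k in Anz. fold k in EA.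
      transitivity (Cdiv (Cmult (RtoC n0) (Cmult (RtoC n0) (Cmult z (hinner HS (Ui HS U0 HU0 k) psi))))
                         (Cmult (RtoC n0) (Cmult (RtoC n0) (hinner HS k psi)))).
      { f_equal. ring. }
      rewrite EA. field. auto.
    - unfold x. rewrite (U_Ui HS U0 HU0). unfold y.
      rewrite (Ui_scal HS U0 HU0), hscal_assoc, Cmult_comm, <- hscal_assoc.
      rewrite Epsi0, <- F. apply (ext_inner HS); intro v; unfold hsub;
        repeat rewrite ?hinner_add_l, ?hinner_scal_l, ?inner_opp_l, ?inner_0_l. ring.
    - pose proof (R_U HS U0 HU0 z psi Hz) as F2. fold k in F2.
      rewrite Epsi0, (U_scal HS U0 HU0), <- F2. unfold y. rewrite (U_scal HS U0 HU0).
      apply (ext_inner HS); intro v; unfold hsub;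
        repeat rewrite ?hinner_add_l, ?hinner_scal_l, ?inner_opp_l, ?inner_0_l. ring. }
  split.
  - intros z Hz. apply (part1 HS dom V Hiso Hsimp Hdd Hdr U0 HU0 Hext0 psi Hpsi Hpo w Hw z Hz).
  - rewrite (part2 HS dom V Hiso Hdd U0 HU0 Hext0 psi Hpsi Hpo).
    apply (part1 HS dom V Hiso Hsimp Hdd Hdr U0 HU0 Hext0 psi Hpsi Hpo w Hw (RtoC 1) Cmod_1).
Qed.
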